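(* Let $t_1,t_7,t_8,m_1\in\mathbb{R}$ and let $\mathfrak g$ be the real linear span of $E_1=\begin{pmatrix} t_1&0&-\frac{i}{2}(m_1-t_7)(t_1-2t_7)&1\\0&t_7+it_8&0&0\\4i&0&2m_1&0\\0&0&0&0\end{pmatrix}$, $E_2=\begin{pmatrix}0&0&0&i\\0&0&0&0\\0&0&0&0\\0&0&0&0\end{pmatrix}$, $E_3=\begin{pmatrix}0&-(m_1-t_7)&0&0\\0&0&0&1\\0&2i&0&0\\0&0&0&0\end{pmatrix}$, $E_4=\begin{pmatrix}0&i(m_1-t_7)&0&0\\0&0&0&i\\0&2&0&0\\0&0&0&0\end{pmatrix}$, $E_5=\begin{pmatrix}0&0&0&0\\0&0&0&0\\0&0&0&1\\0&0&0&0\end{pmatrix}$. Then every integral variety of type $(1/2,0)$ related to $\mathfrak g$ is affinely equivalent to (an open piece of) one of the hypersurfaces 1) $v=2x_1^2+|z_2|^2$; 2) $v=\exp(x_1)+|z_2|^2$; 3) $v=-\ln(1+x_1)+|z_2|^2$; 4) $v=(1+x_1)\ln(1+x_1)+|z_2|^2$; 5) $v=\pm(1+x_1)^{\alpha}+|z_2|^2$ for some $\alpha\in\mathbb{R}\setminus\{0,1,2\}$.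
   Context: Coordinates in $\mathbb{C}^3$ are $z_1=x_1+iy_1$, $z_2=x_2+iy_2$, $w=u+iv$, $z=(z_1,z_2)$. To a complex $4\times4$ matrix $\begin{pmatrix}a_1&a_2&a_3&p\\ b_1&b_2&b_3&s\\ c_1&c_2&c_3&q\\0&0&0&0\end{pmatrix}$ one associates the holomorphic affine vector field $Z=(a_1z_1+a_2z_2+a_3w+p)\frac{\partial}{\partial z_1}+(b_1z_1+b_2z_2+b_3w+s)\frac{\partial}{\partial z_2}+(c_1z_1+c_2z_2+c_3w+q)\frac{\partial}{\partial w}$. For a real linear span $\mathfrak g$ of such matrices, an integral variety of type $(1/2,0)$ related to $\mathfrak g$ is a real-analytic strictly pseudoconvex real hypersurface $M$ defined near $0\in\mathbb{C}^3$, with $0\in M$, given near $0$ by an equation $v=|z_1|^2+|z_2|^2+\frac12(z_1^2+\bar z_1^2)+\sum_{k+l+2m\ge 3}F_{klm}(z,\bar z)u^m$ (with $F_{klm}$ a polynomial of degree $k$ in $z$ and $l$ in $\bar z$, the right-hand side real), such that for every $Z\in\mathfrak g$ the real vector field $Z+\bar Z$ is tangent to $M$, i.e. $\mathrm{Re}(Z(\Phi))|_M=0$ for a defining function $\Phi$ of $M$. Two hypersurfaces are affinely equivalent if a complex affine transformation of $\mathbb{C}^3$ maps a neighbourhood in one onto an open piece of the other. *)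

(* Defs.v *)
From Stdlib Require Import Reals.
From Coquelicot Require Import Coquelicot.
Open Scope R_scope.

Definition pt := (C * C * C)%type.
Definition z1_ (p : pt) : C := fst (fst p).
Definition z2_ (p : pt) : C := snd (fst p).
Definition w_  (p : pt) : C := snd p.
Definition x1_ p := Re (z1_ p).  Definition y1_ p := Im (z1_ p).
Definition x2_ p := Re (z2_ p).  Definition y2_ p := Im (z2_ p).
Definition u_  p := Re (w_ p).   Definition v_  p := Im (w_ p).

(* coefficients c a1 a2 a3 a4 a5 of x1^a1 y1^a2 x2^a3 y2^a4 u^a5 *)
Definition coeffs := nat -> nat -> nat -> nat -> nat -> R.

Definition hom_part (c : coeffs) (N : nat) (x1 y1 x2 y2 u : R) : R :=
  sum_f_R0 (fun a1 =>
  sum_f_R0 (fun a2 =>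
  sum_f_R0 (fun a3 =>
  sum_f_R0 (fun a4 =>
    let a5 := (N - a1 - a2 - a3 - a4)%nat in
    c a1 a2 a3 a4 a5 * x1 ^ a1 * y1 ^ a2 * x2 ^ a3 * y2 ^ a4 * u ^ a5)
  (N - a1 - a2 - a3)%nat) (N - a1 - a2)%nat) (N - a1)%nat) N.

Definition abs_coeffs (c : coeffs) : coeffs :=
  fun a1 a2 a3 a4 a5 => Rabs (c a1 a2 a3 a4 a5).

(* Normal form of type (1/2,0): in the expansion
   F = |z1|^2+|z2|^2+1/2(z1^2+zb1^2) + sum_{k+l+2m>=3} F_klm u^m,
   i.e. in real coordinates the monomials of weighted degree
   a1+a2+a3+a4+2a5 <= 2 are exactly those of 2 x1^2 + x2^2 + y2^2. *)
Definition quad_model_coeff (a1 a2 a3 a4 a5 : nat) : R :=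
  match a1, a2, a3, a4, a5 with
  | 2, 0, 0, 0, 0 => 2%R
  | 0, 0, 2, 0, 0 => 1%R
  | 0, 0, 0, 2, 0 => 1%R
  | _, _, _, _, _ => 0%R
  end%nat.

Definition normal_form_12 (c : coeffs) : Prop :=
  forall a1 a2 a3 a4 a5 : nat, (a1 + a2 + a3 + a4 + 2 * a5 <= 2)%nat ->
    c a1 a2 a3 a4 a5 = quad_model_coeff a1 a2 a3 a4 a5.

Definition in_box (d : R) (p : pt) : Prop :=
  Rabs (x1_ p) < d /\ Rabs (y1_ p) < d /\ Rabs (x2_ p) < d /\
  Rabs (y2_ p) < d /\ Rabs (u_ p) < d /\ Rabs (v_ p) < d.

Definition series_rep (c : coeffs) (d : R) (F : R -> R -> R -> R -> R -> R) : Prop :=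
  ex_series (fun N => hom_part (abs_coeffs c) N d d d d d) /\
  forall x1 y1 x2 y2 u, Rabs x1 < d -> Rabs y1 < d -> Rabs x2 < d ->
    Rabs y2 < d -> Rabs u < d ->
    is_series (fun N => hom_part c N x1 y1 x2 y2 u) (F x1 y1 x2 y2 u).

Definition Mset (F : R -> R -> R -> R -> R -> R) (d : R) (p : pt) : Prop :=
  in_box d p /\ v_ p = F (x1_ p) (y1_ p) (x2_ p) (y2_ p) (u_ p).

(* a complex 4x4 matrix, indices 0..3 *)
Definition cmat := nat -> nat -> C.

(* components f_j (j = 0,1,2 for z1,z2,w) of the vector field Z associated to M *)
Definition vf (M : cmat) (j : nat) (p : pt) : C :=
  Cplus (Cplus (Cmult (M j 0%nat) (z1_ p)) (Cmult (M j 1%nat) (z2_ p)))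
        (Cplus (Cmult (M j 2%nat) (w_ p)) (M j 3%nat)).

Definition Phi (F : R -> R -> R -> R -> R -> R) (p : pt) : R :=
  F (x1_ p) (y1_ p) (x2_ p) (y2_ p) (u_ p) - v_ p.

Definition mkpt (x1 y1 x2 y2 u v : R) : pt := ((x1, y1), (x2, y2), (u, v)).

Definition d_x1 (G : pt -> R) (p : pt) : R :=
  Derive (fun t => G (mkpt t (y1_ p) (x2_ p) (y2_ p) (u_ p) (v_ p))) (x1_ p).
Definition d_y1 (G : pt -> R) (p : pt) : R :=
  Derive (fun t => G (mkpt (x1_ p) t (x2_ p) (y2_ p) (u_ p) (v_ p))) (y1_ p).
Definition d_x2 (G : pt -> R) (p : pt) : R :=
  Derive (fun t => G (mkpt (x1_ p) (y1_ p) t (y2_ p) (u_ p) (v_ p))) (x2_ p).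
Definition d_y2 (G : pt -> R) (p : pt) : R :=
  Derive (fun t => G (mkpt (x1_ p) (y1_ p) (x2_ p) t (u_ p) (v_ p))) (y2_ p).
Definition d_u (G : pt -> R) (p : pt) : R :=
  Derive (fun t => G (mkpt (x1_ p) (y1_ p) (x2_ p) (y2_ p) t (v_ p))) (u_ p).
Definition d_v (G : pt -> R) (p : pt) : R :=
  Derive (fun t => G (mkpt (x1_ p) (y1_ p) (x2_ p) (y2_ p) (u_ p) t)) (v_ p).

(* Wirtinger derivatives d/dz = 1/2 (d/dx - i d/dy) *)
Definition wirt (a b : R) : C := (a / 2, - b / 2).

Definition applyZ (M : cmat) (G : pt -> R) (p : pt) : C :=
  Cplus (Cplus (Cmult (vf M 0 p) (wirt (d_x1 G p) (d_y1 G p)))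
               (Cmult (vf M 1 p) (wirt (d_x2 G p) (d_y2 G p))))
        (Cmult (vf M 2 p) (wirt (d_u G p) (d_v G p))).

Definition E1 (t1 t7 t8 m1 : R) : cmat := fun i j =>
  match i, j with
  | 0%nat, 0%nat => RtoC t1
  | 0%nat, 2%nat => (0, - (1/2) * (m1 - t7) * (t1 - 2 * t7))
  | 0%nat, 3%nat => RtoC 1
  | 1%nat, 1%nat => (t7, t8)
  | 2%nat, 0%nat => (0, 4)
  | 2%nat, 2%nat => RtoC (2 * m1)
  | _, _ => RtoC 0
  end.
Definition E2 : cmat := fun i j =>
  match i, j with
  | 0%nat, 3%nat => (0, 1)
  | _, _ => RtoC 0
  end.
Definition E3 (t7 m1 : R) : cmat := fun i j =>
  match i, j with
  | 0%nat, 1%nat => RtoC (- (m1 - t7))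
  | 1%nat, 3%nat => RtoC 1
  | 2%nat, 1%nat => (0, 2)
  | _, _ => RtoC 0
  end.
Definition E4 (t7 m1 : R) : cmat := fun i j =>
  match i, j with
  | 0%nat, 1%nat => (0, m1 - t7)
  | 1%nat, 3%nat => (0, 1)
  | 2%nat, 1%nat => RtoC 2
  | _, _ => RtoC 0
  end.
Definition E5 : cmat := fun i j =>
  match i, j with
  | 2%nat, 3%nat => RtoC 1
  | _, _ => RtoC 0
  end.

Definition in_g (t1 t7 t8 m1 : R) (M : cmat) : Prop :=
  exists k1 k2 k3 k4 k5 : R, forall i j : nat,
    M i j = Cplus (Cplus (Cplus (Cplus
              (Cmult (RtoC k1) (E1 t1 t7 t8 m1 i j))
              (Cmult (RtoC k2) (E2 i j)))
              (Cmult (RtoC k3) (E3 t7 m1 i j)))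
              (Cmult (RtoC k4) (E4 t7 m1 i j)))
              (Cmult (RtoC k5) (E5 i j)).

Definition integral_variety_12 (g : cmat -> Prop)
    (F : R -> R -> R -> R -> R -> R) (d : R) : Prop :=
  0 < d /\
  (exists c : coeffs, normal_form_12 c /\ series_rep c d F) /\
  (forall M : cmat, g M -> forall p : pt, Mset F d p -> Re (applyZ M (Phi F) p) = 0).

(* complex affine map p |-> A p + b, A a 3x3 complex matrix (indices 0..2) *)
Definition aff (A : cmat) (b : pt) (p : pt) : pt :=
  let row i := Cplus (Cplus (Cmult (A i 0%nat) (z1_ p)) (Cmult (A i 1%nat) (z2_ p)))
                     (Cmult (A i 2%nat) (w_ p)) in
  ((Cplus (row 0%nat) (z1_ b), Cplus (row 1%nat) (z2_ b)), Cplus (row 2%nat) (w_ b)).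

Definition det3 (A : cmat) : C :=
  Cminus (Cplus
    (Cmult (A 0%nat 0%nat) (Cminus (Cmult (A 1%nat 1%nat) (A 2%nat 2%nat)) (Cmult (A 1%nat 2%nat) (A 2%nat 1%nat))))
    (Cmult (A 0%nat 2%nat) (Cminus (Cmult (A 1%nat 0%nat) (A 2%nat 1%nat)) (Cmult (A 1%nat 1%nat) (A 2%nat 0%nat)))))
    (Cmult (A 0%nat 1%nat) (Cminus (Cmult (A 1%nat 0%nat) (A 2%nat 2%nat)) (Cmult (A 1%nat 2%nat) (A 2%nat 0%nat)))).

Definition near (q : pt) (e : R) (p : pt) : Prop :=
  Rabs (x1_ p - x1_ q) < e /\ Rabs (y1_ p - y1_ q) < e /\
  Rabs (x2_ p - x2_ q) < e /\ Rabs (y2_ p - y2_ q) < e /\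
  Rabs (u_ p - u_ q) < e /\ Rabs (v_ p - v_ q) < e.
Definition openC (W : pt -> Prop) : Prop :=
  forall q, W q -> exists e, 0 < e /\ forall p, near q e p -> W p.

Definition affinely_equiv (F : R -> R -> R -> R -> R -> R) (d : R)
    (S : pt -> Prop) : Prop :=
  exists (d' : R) (A : cmat) (b : pt) (W : pt -> Prop),
    0 < d' /\ d' <= d /\ det3 A <> RtoC 0 /\ openC W /\
    forall q, (S q /\ W q) <-> exists p, Mset F d' p /\ q = aff A b p.

Definition model1 (p : pt) : Prop :=
  v_ p = 2 * x1_ p ^ 2 + (x2_ p ^ 2 + y2_ p ^ 2).
Definition model2 (p : pt) : Prop :=
  v_ p = exp (x1_ p) + (x2_ p ^ 2 + y2_ p ^ 2).
Definition model3 (p : pt) : Prop :=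
  0 < 1 + x1_ p /\ v_ p = - ln (1 + x1_ p) + (x2_ p ^ 2 + y2_ p ^ 2).
Definition model4 (p : pt) : Prop :=
  0 < 1 + x1_ p /\ v_ p = (1 + x1_ p) * ln (1 + x1_ p) + (x2_ p ^ 2 + y2_ p ^ 2).
Definition model5 (s alpha : R) (p : pt) : Prop :=
  0 < 1 + x1_ p /\ v_ p = s * Rpower (1 + x1_ p) alpha + (x2_ p ^ 2 + y2_ p ^ 2).

(* Main.v *)
From Pilot Require Import Defs.
From Stdlib Require Import Reals Lra Lia Psatz.
From Coquelicot Require Import Coquelicot.
Open Scope R_scope.
Import Pilot.Defs.

Definition NS (N : nat) (g : nat -> nat -> nat -> nat -> nat -> R) : R :=
  sum_f_R0 (fun a1 =>
  sum_f_R0 (fun a2 =>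
  sum_f_R0 (fun a3 =>
  sum_f_R0 (fun a4 => g a1 a2 a3 a4 (N - a1 - a2 - a3 - a4)%nat)
  (N - a1 - a2 - a3)%nat) (N - a1 - a2)%nat) (N - a1)%nat) N.

Lemma sum_ext (f g : nat -> R) n : (forall i, f i = g i) -> sum_f_R0 f n = sum_f_R0 g n.
Proof. intros H; induction n; simpl; rewrite ?IHn, ?H; reflexivity. Qed.

Lemma NS_ext N g h : (forall a1 a2 a3 a4 a5, g a1 a2 a3 a4 a5 = h a1 a2 a3 a4 a5) ->
  NS N g = NS N h.
Proof. intros H; unfold NS. repeat (apply sum_ext; intro). apply H. Qed.

Lemma NS_le N g h : (forall a1 a2 a3 a4 a5, g a1 a2 a3 a4 a5 <= h a1 a2 a3 a4 a5) ->
  NS N g <= NS N h.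
Proof. intros H; unfold NS. repeat (apply sum_Rle; intros). apply H. Qed.

Lemma sum_abs_le (f : nat -> R) n : Rabs (sum_f_R0 f n) <= sum_f_R0 (fun i => Rabs (f i)) n.
Proof. apply sum_f_R0_triangle. Qed.

Lemma NS_abs N g : Rabs (NS N g) <= NS N (fun a1 a2 a3 a4 a5 => Rabs (g a1 a2 a3 a4 a5)).
Proof.
  unfold NS. eapply Rle_trans; [apply sum_abs_le|]. apply sum_Rle; intros.
  eapply Rle_trans; [apply sum_abs_le|]. apply sum_Rle; intros.
  eapply Rle_trans; [apply sum_abs_le|]. apply sum_Rle; intros.
  eapply Rle_trans; [apply sum_abs_le|]. apply Rle_refl.
Qed.

Lemma NS_minus N g h : NS N (fun a1 a2 a3 a4 a5 => g a1 a2 a3 a4 a5 - h a1 a2 a3 a4 a5)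
  = NS N g - NS N h.
Proof.
  unfold NS. rewrite <- minus_sum. apply sum_ext; intro.
  rewrite <- minus_sum. apply sum_ext; intro.
  rewrite <- minus_sum. apply sum_ext; intro.
  rewrite <- minus_sum. reflexivity.
Qed.

Lemma NS_scal N g x : NS N (fun a1 a2 a3 a4 a5 => x * g a1 a2 a3 a4 a5) = x * NS N g.
Proof.
  unfold NS. rewrite scal_sum. apply sum_ext; intro.
  rewrite Rmult_comm, scal_sum. apply sum_ext; intro.
  rewrite Rmult_comm, scal_sum. apply sum_ext; intro.
  rewrite Rmult_comm, scal_sum. apply sum_ext; intro. ring.
Qed.

Definition mono5 (a1 a2 a3 a4 a5 : nat) (q : nat -> R) : R :=
  q 0%nat ^ a1 * q 1%nat ^ a2 * q 2%nat ^ a3 * q 3%nat ^ a4 * q 4%nat ^ a5.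

Definition F5 (F : R -> R -> R -> R -> R -> R) (q : nat -> R) : R :=
  F (q 0%nat) (q 1%nat) (q 2%nat) (q 3%nat) (q 4%nat).

Lemma hom_NS c N q : hom_part c N (q 0%nat) (q 1%nat) (q 2%nat) (q 3%nat) (q 4%nat) =
  NS N (fun a1 a2 a3 a4 a5 => c a1 a2 a3 a4 a5 * mono5 a1 a2 a3 a4 a5 q).
Proof.
  unfold hom_part, NS, mono5. repeat (apply sum_ext; intro). ring.
Qed.

Definition upd (q : nat -> R) (j : nat) (s : R) : nat -> R :=
  fun k => if Nat.eqb k j then s else q k.

Definition expo (j a1 a2 a3 a4 a5 : nat) : nat :=
  match j with 0 => a1 | 1 => a2 | 2 => a3 | 3 => a4 | _ => a5 end%nat.

Lemma mono5_upd j a1 a2 a3 a4 a5 q s : (j < 5)%nat ->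
  mono5 a1 a2 a3 a4 a5 (upd q j s) = s ^ (expo j a1 a2 a3 a4 a5) * mono5 a1 a2 a3 a4 a5 (upd q j 1).
Proof.
  intros Hj. unfold mono5, upd.
  destruct j as [|[|[|[|[|j]]]]]; simpl; rewrite ?pow1; try ring; lia.
Qed.

Lemma mono5_upd_self j a1 a2 a3 a4 a5 q : (j < 5)%nat ->
  mono5 a1 a2 a3 a4 a5 q = mono5 a1 a2 a3 a4 a5 (upd q j (q j)).
Proof.
  intros Hj. unfold mono5, upd.
  destruct j as [|[|[|[|[|j]]]]]; simpl; rewrite ?pow1; try ring; lia.
Qed.

Lemma mono5_abs_le a1 a2 a3 a4 a5 q p :
  (forall k, (k < 5)%nat -> Rabs (q k) <= p k) ->
  Rabs (mono5 a1 a2 a3 a4 a5 q) <= mono5 a1 a2 a3 a4 a5 p.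
Proof.
  intros H. unfold mono5. rewrite !Rabs_mult, <- !RPow_abs.
  assert (H0 := H 0%nat ltac:(lia)). assert (H1 := H 1%nat ltac:(lia)).
  assert (H2 := H 2%nat ltac:(lia)). assert (H3 := H 3%nat ltac:(lia)).
  assert (H4 := H 4%nat ltac:(lia)).
  assert (P: forall k a, (k < 5)%nat -> 0 <= Rabs (q k) ^ a <= p k ^ a).
  { intros k a Hk. split. apply pow_le, Rabs_pos. apply pow_incr. split. apply Rabs_pos. apply H; lia. }
  destruct (P 0%nat a1) as [A1 B1]; [lia|]. destruct (P 1%nat a2) as [A2 B2]; [lia|].
  destruct (P 2%nat a3) as [A3 B3]; [lia|]. destruct (P 3%nat a4) as [A4 B4]; [lia|].
  destruct (P 4%nat a5) as [A5 B5]; [lia|].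
  repeat apply Rmult_le_compat; auto; repeat apply Rmult_le_pos; auto.
Qed.

Definition Gf (a : nat) (s h : R) : R := (s + h) ^ a - s ^ a - INR a * h * s ^ (pred a).

Lemma pred_pow a s : INR a * (s * s ^ pred a) = INR a * s ^ a.
Proof. destruct a; simpl; ring. Qed.

Lemma Gf_S a s h : Gf (S a) s h = (s + h) * Gf a s h + INR a * h ^ 2 * s ^ pred a.
Proof.
  unfold Gf. replace (pred (S a)) with a by reflexivity.
  rewrite S_INR. simpl pow.
  assert (E := pred_pow a s). 
  replace ((INR a + 1) * h * s ^ a) with (h * s ^ a + h * (INR a * s ^ a)) by ring.
  rewrite <- E. ring.
Qed.

Lemma Gf_pos a s h : 0 <= s -> 0 <= h -> 0 <= Gf a s h.
Proof.
  intros Hs Hh. induction a.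
  - unfold Gf; simpl; lra.
  - rewrite Gf_S. apply Rplus_le_le_0_compat. apply Rmult_le_pos; lra.
    apply Rmult_le_pos. apply Rmult_le_pos. apply pos_INR. apply pow_le; lra. apply pow_le; lra.
Qed.

Definition Rt (a : nat) (q t : R) : R := (q + t) ^ a - q ^ a - INR a * t * q ^ (pred a).

Lemma Rt_S a q t : Rt (S a) q t = (q + t) * Rt a q t + INR a * t ^ 2 * q ^ pred a.
Proof.
  unfold Rt. replace (pred (S a)) with a by reflexivity.
  rewrite S_INR. simpl pow.
  assert (E := pred_pow a q).
  replace ((INR a + 1) * t * q ^ a) with (t * q ^ a + t * (INR a * q ^ a)) by ring.
  rewrite <- E. ring.
Qed.

Lemma Rt_le a q t : Rabs (Rt a q t) <= Gf a (Rabs q) (Rabs t).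
Proof.
  induction a.
  - unfold Rt, Gf; simpl. rewrite Rminus_diag. replace (0 - 0*t*1) with 0 by ring.
    replace ((Rabs q + Rabs t) ^ 0 - Rabs q ^ 0 - 0 * Rabs t * Rabs q ^ 0) with 0 by (simpl; ring).
    rewrite Rabs_R0; lra.
  - rewrite Rt_S, Gf_S. eapply Rle_trans; [apply Rabs_triang|].
    apply Rplus_le_compat.
    + rewrite Rabs_mult. apply Rmult_le_compat; try apply Rabs_pos; auto.
      apply Rabs_triang.
    + rewrite !Rabs_mult, <- !RPow_abs, Rabs_pos_eq by apply pos_INR. apply Rle_refl.
Qed.

Lemma Gf_scale a s h D : 0 <= s -> 0 <= h -> h <= D ->
  D ^ 2 * Gf a s h <= h ^ 2 * Gf a s D.
Proof.
  intros Hs Hh HD. induction a.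
  - unfold Gf; simpl; lra.
  - rewrite !Gf_S.
    assert (G1 := Gf_pos a s h Hs Hh). assert (G2 := Gf_pos a s D Hs ltac:(lra)).
    assert (P := pow_le s (pred a) Hs). assert (I := pos_INR a).
    assert (0 <= INR a * s ^ pred a) by (apply Rmult_le_pos; auto).
    assert (h^2 <= D^2) by (simpl; nra).
    assert (D ^ 2 * ((s + h) * Gf a s h) <= h^2 * ((s + D) * Gf a s D)).
    { replace (D ^ 2 * ((s + h) * Gf a s h)) with ((s+h) * (D^2 * Gf a s h)) by ring.
      replace (h^2 * ((s + D) * Gf a s D)) with ((s+D) * (h^2 * Gf a s D)) by ring.
      apply Rmult_le_compat; try lra. apply Rmult_le_pos; simpl; nra. }
    nra.
Qed.

Lemma Gf_le_pow a s D : 0 <= s -> 0 <= D -> Gf a s D <= (s + D) ^ a.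
Proof.
  intros Hs HD. unfold Gf. assert (0 <= s ^ a) by (apply pow_le; lra).
  assert (0 <= INR a * D * s ^ pred a) by (apply Rmult_le_pos; [apply Rmult_le_pos; [apply pos_INR|lra]|apply pow_le; lra]).
  lra.
Qed.

Lemma deriv_bound a s D : 0 <= s -> 0 <= D -> INR a * D * s ^ pred a <= (s + D) ^ a.
Proof.
  intros Hs HD. assert (H := Gf_pos a s D Hs HD). unfold Gf in H.
  assert (0 <= s ^ a) by (apply pow_le; lra). lra.
Qed.

Definition cst (r : R) : nat -> R := fun _ => r.

Definition dterm (c : coeffs) (j : nat) (q : nat -> R) a1 a2 a3 a4 a5 : R :=
  c a1 a2 a3 a4 a5 * (INR (expo j a1 a2 a3 a4 a5) * q j ^ pred (expo j a1 a2 a3 a4 a5)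
     * mono5 a1 a2 a3 a4 a5 (upd q j 1)).

Lemma upd_abs_le q j r : (forall k, (k < 5)%nat -> Rabs (q k) <= r) -> 0 <= r ->
  forall k, (k < 5)%nat -> Rabs (upd q j 1 k) <= upd (cst r) j 1 k.
Proof.
  intros H Hr k Hk. unfold upd, cst. destruct (Nat.eqb k j). rewrite Rabs_R1; lra. auto.
Qed.

Lemma mono5_cst_split j a1 a2 a3 a4 a5 r : (j < 5)%nat ->
  mono5 a1 a2 a3 a4 a5 (cst r) = r ^ expo j a1 a2 a3 a4 a5 * mono5 a1 a2 a3 a4 a5 (upd (cst r) j 1).
Proof.
  intros Hj. rewrite (mono5_upd_self j _ _ _ _ _ (cst r) Hj). rewrite mono5_upd by auto. reflexivity.
Qed.

Lemma term_bound c j q D r t a1 a2 a3 a4 a5 : (j < 5)%nat -> 0 < D ->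
  (forall k, (k < 5)%nat -> Rabs (q k) + D <= r) -> Rabs t <= D ->
  D ^ 2 * Rabs (c a1 a2 a3 a4 a5 * mono5 a1 a2 a3 a4 a5 (upd q j (q j + t))
        - c a1 a2 a3 a4 a5 * mono5 a1 a2 a3 a4 a5 q - t * dterm c j q a1 a2 a3 a4 a5)
  <= t ^ 2 * (Rabs (c a1 a2 a3 a4 a5) * mono5 a1 a2 a3 a4 a5 (cst r)).
Proof.
  intros Hj HD Hq Ht.
  set (e := expo j a1 a2 a3 a4 a5).
  set (m1 := mono5 a1 a2 a3 a4 a5 (upd q j 1)).
  assert (E : c a1 a2 a3 a4 a5 * mono5 a1 a2 a3 a4 a5 (upd q j (q j + t))
        - c a1 a2 a3 a4 a5 * mono5 a1 a2 a3 a4 a5 q - t * dterm c j q a1 a2 a3 a4 a5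
        = c a1 a2 a3 a4 a5 * m1 * Rt e (q j) t).
  { rewrite (mono5_upd j), (mono5_upd_self j _ _ _ _ _ q), (mono5_upd j _ _ _ _ _ q (q j)) by auto.
    unfold dterm, Rt. fold e m1. ring. }
  rewrite E. rewrite (mono5_cst_split j) by auto. fold e.
  assert (r0 : 0 <= r). { assert (X := Hq 0%nat ltac:(lia)). assert (Y:=Rabs_pos (q 0%nat)). lra. }
  assert (Hm : Rabs m1 <= mono5 a1 a2 a3 a4 a5 (upd (cst r) j 1)).
  { apply mono5_abs_le. apply upd_abs_le; auto. intros k Hk. assert (X:= Hq k Hk). lra. }
  assert (Hqj : Rabs (q j) + D <= r) by auto.
  assert (HR := Rt_le e (q j) t).
  assert (HS := Gf_scale e (Rabs (q j)) (Rabs t) D (Rabs_pos _) (Rabs_pos _) Ht).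
  assert (HP := Gf_le_pow e (Rabs (q j)) D (Rabs_pos _) ltac:(lra)).
  assert (HP2 : (Rabs (q j) + D) ^ e <= r ^ e) by (apply pow_incr; split; [apply Rplus_le_le_0_compat; [apply Rabs_pos|lra]|auto]).
  assert (G0 := Gf_pos e (Rabs (q j)) D (Rabs_pos _) ltac:(lra)).
  rewrite !Rabs_mult.
  assert (C0 := Rabs_pos (c a1 a2 a3 a4 a5)). assert (M0 := Rabs_pos m1).
  assert (Tabs : t ^ 2 = Rabs t ^ 2) by (rewrite RPow_abs, Rabs_pos_eq; [reflexivity| simpl; nra]).
  rewrite Tabs.
  apply Rle_trans with (Rabs (c a1 a2 a3 a4 a5) * Rabs m1 * (D ^ 2 * Gf e (Rabs (q j)) (Rabs t))).
  { replace (D ^ 2 * (Rabs (c a1 a2 a3 a4 a5) * Rabs m1 * Rabs (Rt e (q j) t))) with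
      (Rabs (c a1 a2 a3 a4 a5) * Rabs m1 * (D ^ 2 * Rabs (Rt e (q j) t))) by ring.
    apply Rmult_le_compat_l. apply Rmult_le_pos; auto. apply Rmult_le_compat_l. simpl; nra. auto. }
  apply Rle_trans with (Rabs (c a1 a2 a3 a4 a5) * Rabs m1 * (Rabs t ^ 2 * r ^ e)).
  { apply Rmult_le_compat_l. apply Rmult_le_pos; auto.
    eapply Rle_trans; [apply HS|]. apply Rmult_le_compat_l. apply pow_le, Rabs_pos. lra. }
  replace (Rabs t ^ 2 * (Rabs (c a1 a2 a3 a4 a5) * (r ^ e * mono5 a1 a2 a3 a4 a5 (upd (cst r) j 1))))
   with (Rabs (c a1 a2 a3 a4 a5) * mono5 a1 a2 a3 a4 a5 (upd (cst r) j 1) * (Rabs t ^ 2 * r ^ e)) by ring.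
  apply Rmult_le_compat_r. apply Rmult_le_pos; apply pow_le; [apply Rabs_pos|lra].
  apply Rmult_le_compat_l; auto.
Qed.

Lemma dterm_bound c j q D r a1 a2 a3 a4 a5 : (j < 5)%nat -> 0 < D ->
  (forall k, (k < 5)%nat -> Rabs (q k) + D <= r) ->
  D * Rabs (dterm c j q a1 a2 a3 a4 a5) <= Rabs (c a1 a2 a3 a4 a5) * mono5 a1 a2 a3 a4 a5 (cst r).
Proof.
  intros Hj HD Hq. unfold dterm.
  rewrite (mono5_cst_split j) by auto.
  set (e := expo j a1 a2 a3 a4 a5).
  assert (r0 : 0 <= r). { assert (X := Hq 0%nat ltac:(lia)). assert (Y:=Rabs_pos (q 0%nat)). lra. }
  assert (Hm : Rabs (mono5 a1 a2 a3 a4 a5 (upd q j 1)) <= mono5 a1 a2 a3 a4 a5 (upd (cst r) j 1)).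
  { apply mono5_abs_le. apply upd_abs_le; auto. intros k Hk. assert (X:= Hq k Hk). lra. }
  assert (Hqj : Rabs (q j) + D <= r) by auto.
  assert (HB := deriv_bound e (Rabs (q j)) D (Rabs_pos _) ltac:(lra)).
  assert (HP2 : (Rabs (q j) + D) ^ e <= r ^ e) by (apply pow_incr; split; [apply Rplus_le_le_0_compat; [apply Rabs_pos|lra]|auto]).
  rewrite !Rabs_mult, <- RPow_abs, (Rabs_pos_eq (INR e)) by apply pos_INR.
  assert (C0 := Rabs_pos (c a1 a2 a3 a4 a5)).
  assert (M0 := Rabs_pos (mono5 a1 a2 a3 a4 a5 (upd q j 1))).
  replace (D * (Rabs (c a1 a2 a3 a4 a5) * (INR e * Rabs (q j) ^ pred e * Rabs (mono5 a1 a2 a3 a4 a5 (upd q j 1)))))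
   with (Rabs (c a1 a2 a3 a4 a5) * (INR e * D * Rabs (q j) ^ pred e) * Rabs (mono5 a1 a2 a3 a4 a5 (upd q j 1))) by ring.
  assert (X : INR e * D * Rabs (q j) ^ pred e <= r ^ e) by lra.
  assert (X0 : 0 <= INR e * D * Rabs (q j) ^ pred e).
  { apply Rmult_le_pos; [apply Rmult_le_pos; [apply pos_INR|lra]|apply pow_le, Rabs_pos]. }
  rewrite Rmult_assoc. apply Rmult_le_compat_l; auto.
  apply Rmult_le_compat; auto.
Qed.

Definition hom5 (c : coeffs) N (q : nat -> R) : R :=
  hom_part c N (q 0%nat) (q 1%nat) (q 2%nat) (q 3%nat) (q 4%nat).

Lemma habs_NS c N r : hom_part (abs_coeffs c) N r r r r r =
  NS N (fun a1 a2 a3 a4 a5 => Rabs (c a1 a2 a3 a4 a5) * mono5 a1 a2 a3 a4 a5 (cst r)).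
Proof. apply (hom_NS (abs_coeffs c) N (cst r)). Qed.

Lemma habs_mono c N r s : 0 <= r <= s ->
  hom_part (abs_coeffs c) N r r r r r <= hom_part (abs_coeffs c) N s s s s s.
Proof.
  intros Hr. rewrite !habs_NS. apply NS_le; intros.
  apply Rmult_le_compat_l. apply Rabs_pos.
  eapply Rle_trans; [apply Rle_abs|]. apply mono5_abs_le. intros k _. unfold cst.
  rewrite Rabs_pos_eq; lra.
Qed.

Lemma sum_zero n : sum_f_R0 (fun _ => 0) n = 0.
Proof. induction n; simpl; [reflexivity| rewrite IHn; ring]. Qed.

Lemma NS_zero N : NS N (fun _ _ _ _ _ => 0) = 0.
Proof.
  unfold NS.
  assert (Z : forall f n, (forall i, f i = 0) -> sum_f_R0 f n = 0).
  { intros f n H. rewrite (sum_ext f (fun _ => 0)) by auto. apply sum_zero. }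
  apply Z; intro. apply Z; intro. apply Z; intro. apply Z; intro. reflexivity.
Qed.

Lemma habs_pos c N r : 0 <= r -> 0 <= hom_part (abs_coeffs c) N r r r r r.
Proof.
  intros Hr. rewrite habs_NS. rewrite <- (NS_zero N).
  apply NS_le; intros. apply Rmult_le_pos. apply Rabs_pos.
  apply Rle_trans with (Rabs (mono5 a1 a2 a3 a4 a5 (cst r))). apply Rabs_pos.
  apply mono5_abs_le. intros k _. unfold cst. rewrite Rabs_pos_eq; lra.
Qed.

Definition DN (c : coeffs) (j : nat) (q : nat -> R) (N : nat) : R := NS N (dterm c j q).

Lemma hom5_NS c N q : hom5 c N q = NS N (fun a1 a2 a3 a4 a5 => c a1 a2 a3 a4 a5 * mono5 a1 a2 a3 a4 a5 q).
Proof. apply hom_NS. Qed.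

Lemma hom_deriv_bound c j q D r t N : (j < 5)%nat -> 0 < D ->
  (forall k, (k < 5)%nat -> Rabs (q k) + D <= r) -> Rabs t <= D ->
  D ^ 2 * Rabs (hom5 c N (upd q j (q j + t)) - hom5 c N q - t * DN c j q N)
  <= t ^ 2 * hom_part (abs_coeffs c) N r r r r r.
Proof.
  intros Hj HD Hq Ht. rewrite !hom5_NS, habs_NS. unfold DN.
  rewrite <- NS_scal, <- !NS_minus, <- NS_scal.
  rewrite <- (Rabs_pos_eq (D ^ 2)) by (simpl; nra). rewrite <- Rabs_mult, <- NS_scal.
  eapply Rle_trans; [apply NS_abs|]. apply NS_le; intros.
  rewrite Rabs_mult, (Rabs_pos_eq (D^2)) by (simpl; nra). apply term_bound; auto.
Qed.

Lemma DN_bound c j q D r N : (j < 5)%nat -> 0 < D ->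
  (forall k, (k < 5)%nat -> Rabs (q k) + D <= r) ->
  D * Rabs (DN c j q N) <= hom_part (abs_coeffs c) N r r r r r.
Proof.
  intros Hj HD Hq. rewrite habs_NS. unfold DN.
  rewrite <- (Rabs_pos_eq D) at 1 by lra. rewrite <- Rabs_mult, <- NS_scal.
  eapply Rle_trans; [apply NS_abs|]. apply NS_le; intros.
  rewrite Rabs_mult, (Rabs_pos_eq D) by lra. apply dterm_bound; auto.
Qed.

Lemma upd_same q j k : upd q j (q j) k = q k.
Proof. unfold upd. destruct (Nat.eqb_spec k j); subst; reflexivity. Qed.

Lemma F5_upd_same F q j : F5 F (upd q j (q j)) = F5 F q.
Proof. unfold F5. rewrite !upd_same. reflexivity. Qed.

Lemma upd_abs q j s k : Rabs (upd q j s k) <= Rmax (Rabs s) (Rabs (q k)).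
Proof. unfold upd. destruct (Nat.eqb k j). apply Rmax_l. apply Rmax_r. Qed.

Definition qmax (q : nat -> R) : R :=
  Rmax (Rabs (q 0%nat)) (Rmax (Rabs (q 1%nat)) (Rmax (Rabs (q 2%nat)) (Rmax (Rabs (q 3%nat)) (Rabs (q 4%nat))))).

Lemma qmax_ge q k : (k < 5)%nat -> Rabs (q k) <= qmax q.
Proof.
  intros Hk. unfold qmax.
  assert (R1 := Rmax_l). assert (R2 := Rmax_r).
  destruct k as [|[|[|[|[|k]]]]].
  - apply Rmax_l.
  - eapply Rle_trans; [|apply Rmax_r]. apply Rmax_l.
  - eapply Rle_trans; [|apply Rmax_r]. eapply Rle_trans; [|apply Rmax_r]. apply Rmax_l.
  - eapply Rle_trans; [|apply Rmax_r]. eapply Rle_trans; [|apply Rmax_r].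
    eapply Rle_trans; [|apply Rmax_r]. apply Rmax_l.
  - eapply Rle_trans; [|apply Rmax_r]. eapply Rle_trans; [|apply Rmax_r].
    eapply Rle_trans; [|apply Rmax_r]. apply Rmax_r.
  - lia.
Qed.

Lemma qmax_lt q d : (forall k, (k < 5)%nat -> Rabs (q k) < d) -> qmax q < d.
Proof.
  intros H. unfold qmax.
  repeat apply Rmax_lub_lt; apply H; lia.
Qed.

Lemma series_at c d F q : series_rep c d F -> (forall k, (k < 5)%nat -> Rabs (q k) < d) ->
  is_series (fun N => hom5 c N q) (F5 F q).
Proof.
  intros [_ H] Hq. apply H; apply Hq; lia.
Qed.

Lemma is_series_lin (a b c : nat -> R) la lb lc t : is_series a la -> is_series b lb ->
  is_series c lc -> is_series (fun n => a n - b n - t * c n) (la - lb - t*lc).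
Proof. intros A B C.
 assert (H := is_series_minus _ _ _ _ (is_series_minus _ _ _ _ A B) (is_series_scal t _ _ C)).
 replace (la - lb - t*lc) with (plus (plus la (opp lb)) (opp (scal t lc))) by reflexivity.
 eapply is_series_ext; [|exact H]. intros n. reflexivity.
Qed.

Lemma ex_series_scalR (a : nat -> R) x : ex_series a -> ex_series (fun n => x * a n).
Proof. intros H. apply (ex_series_scal x a H). Qed.

Lemma is_series_abs_le (a b : nat -> R) la lb : is_series a la -> is_series b lb ->
  (forall n, Rabs (a n) <= b n) -> Rabs la <= lb.
Proof.
  intros A B H.
  assert (EA : ex_series (fun n => Rabs (a n))).
  { apply (@ex_series_le R_AbsRing R_CompleteNormedModule (fun n => Rabs (a n)) b). intros n. unfold norm; simpl. unfold abs; simpl. rewrite Rabs_Rabsolu. auto.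
    eexists; eauto. }
  rewrite <- (is_series_unique _ _ A), <- (is_series_unique _ _ B).
  eapply Rle_trans; [apply Series_Rabs; auto|]. apply Series_le. intros n; split; [apply Rabs_pos|auto].
  eexists; eauto.
Qed.

Lemma F_is_derive c d F q j : series_rep c d F -> (forall k, (k < 5)%nat -> Rabs (q k) < d) ->
  (j < 5)%nat -> ex_derive (fun s => F5 F (upd q j s)) (q j).
Proof.
  intros Hs Hq Hj.
  set (m := qmax q). assert (Hm : m < d) by (apply qmax_lt; auto).
  assert (Hm0 : 0 <= m) by (apply Rle_trans with (Rabs (q 0%nat)); [apply Rabs_pos| apply qmax_ge; lia]).
  set (D := (d - m) / 2). assert (HD : 0 < D) by (unfold D; lra).
  set (r := m + D). assert (Hr : r < d) by (unfold r, D; lra).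
  assert (Hqr : forall k, (k < 5)%nat -> Rabs (q k) + D <= r).
  { intros k Hk. assert (X := qmax_ge q k Hk). unfold r; fold m in X; lra. }
  destruct Hs as [HS HF].
  set (S := Series (fun N => hom_part (abs_coeffs c) N d d d d d)).
  assert (HSs : is_series (fun N => hom_part (abs_coeffs c) N d d d d d) S) by (apply Series_correct; auto).
  assert (EDN : ex_series (DN c j q)).
  { apply (@ex_series_le R_AbsRing R_CompleteNormedModule (DN c j q) (fun N => / D * hom_part (abs_coeffs c) N d d d d d)).
    2: apply ex_series_scalR; auto.
    intros N. unfold norm; simpl; unfold abs; simpl.
    assert (X := DN_bound c j q D r N Hj HD Hqr).
    assert (Hr0 : 0 <= r <= d). { split. unfold r. lra. lra. } assert (Y := habs_mono c N r d Hr0).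
    apply Rmult_le_reg_l with D; auto. rewrite <- Rmult_assoc, Rinv_r, Rmult_1_l by lra. lra. }
  set (SD := Series (DN c j q)).
  assert (HSD : is_series (DN c j q) SD) by (apply Series_correct; auto).
  assert (S0 : 0 <= S).
  { assert (X : Rabs S <= S).
    { apply (is_series_abs_le (fun N => hom_part (abs_coeffs c) N d d d d d) (fun N => hom_part (abs_coeffs c) N d d d d d) S S); auto.
      intros N. rewrite Rabs_pos_eq. lra. apply habs_pos; lra. }
    assert (Y := Rabs_pos S). lra. }
  assert (Key : forall t, Rabs t <= D ->
    D ^ 2 * Rabs (F5 F (upd q j (q j + t)) - F5 F q - t * SD) <= t ^ 2 * S).
  { intros t Ht.
    assert (H1 : is_series (fun N => hom5 c N (upd q j (q j + t))) (F5 F (upd q j (q j + t)))).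
    { apply series_at with d; [split; auto|]. intros k Hk.
      eapply Rle_lt_trans; [apply upd_abs|]. apply Rmax_lub_lt.
      eapply Rle_lt_trans; [apply Rabs_triang|]. assert (X := Hqr j Hj). lra.
      auto. }
    assert (H0 : is_series (fun N => hom5 c N q) (F5 F q)).
    { apply series_at with d; [split; auto|auto]. }
    assert (HL := is_series_lin _ _ _ _ _ _ t H1 H0 HSD).
    rewrite <- (Rabs_pos_eq (D^2)) by (simpl; nra). rewrite <- Rabs_mult.
    apply (is_series_abs_le (fun N => D ^ 2 * (hom5 c N (upd q j (q j + t)) - hom5 c N q - t * DN c j q N)) (fun N => t ^ 2 * hom_part (abs_coeffs c) N d d d d d)).
    - replace (D ^ 2 * (F5 F (upd q j (q j + t)) - F5 F q - t * SD)) with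
        (scal (D^2) (F5 F (upd q j (q j + t)) - F5 F q - t * SD)) by reflexivity.
      exact (is_series_scal (D^2) _ _ HL).
    - replace (t ^ 2 * S) with (scal (t^2) S) by reflexivity. exact (is_series_scal (t^2) _ _ HSs).
    - intros N.
      rewrite Rabs_mult, (Rabs_pos_eq (D^2)) by (simpl; nra).
      eapply Rle_trans; [apply hom_deriv_bound; eauto|].
      apply Rmult_le_compat_l. simpl; nra. apply habs_mono. split; [unfold r|]; lra. }
  exists SD. apply is_derive_Reals. intros eps Heps.
  set (del := Rmin D (eps * D ^ 2 / (S + 1))).
  assert (Hdel : 0 < del).
  { unfold del. apply Rmin_pos; auto. apply Rdiv_lt_0_compat. apply Rmult_lt_0_compat; auto. simpl; nra. lra. }
  exists (mkposreal del Hdel). intros h Hh0 Hh. simpl in Hh.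
  assert (HhD : Rabs h <= D) by (eapply Rle_trans; [left; exact Hh|apply Rmin_l]).
  assert (Hhe : Rabs h < eps * D ^ 2 / (S + 1)) by (eapply Rlt_le_trans; [exact Hh|apply Rmin_r]).
  assert (K := Key h HhD). rewrite F5_upd_same.
  assert (Ha : 0 < Rabs h) by (apply Rabs_pos_lt; auto).
  replace ((F5 F (upd q j (q j + h)) - F5 F q) / h - SD) with
    ((F5 F (upd q j (q j + h)) - F5 F q - h * SD) / h) by (field; auto).
  rewrite Rabs_div by auto.
  apply Rmult_lt_reg_l with (D ^ 2 * Rabs h). apply Rmult_lt_0_compat; auto; simpl; nra.
  replace (D ^ 2 * Rabs h * (Rabs (F5 F (upd q j (q j + h)) - F5 F q - h * SD) / Rabs h)) with
    (D ^ 2 * Rabs (F5 F (upd q j (q j + h)) - F5 F q - h * SD)) by (field; lra).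
  assert (T2 : h ^ 2 = Rabs h * Rabs h) by (rewrite <- Rabs_mult; simpl; rewrite Rmult_1_r; rewrite Rabs_pos_eq; nra).
  eapply Rle_lt_trans; [exact K|]. rewrite T2.
  assert (X : Rabs h * (S + 1) < eps * D ^ 2).
  { apply Rmult_lt_reg_r with (/ (S+1)). apply Rinv_0_lt_compat; lra.
    rewrite Rmult_assoc, Rinv_r, Rmult_1_r by lra. exact Hhe. }
  assert (D2 : 0 < D ^ 2) by (simpl; nra).
  nra.
Qed.

Lemma mono5_cst a1 a2 a3 a4 a5 r : mono5 a1 a2 a3 a4 a5 (cst r) = r ^ (a1 + a2 + a3 + a4 + a5).
Proof. unfold mono5, cst. rewrite !pow_add. ring. Qed.

Lemma pow_small r d n : 0 <= r <= d -> 0 < d -> (1 <= n)%nat -> r ^ n <= (r / d) * d ^ n.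
Proof.
  intros Hr Hd Hn. destruct n as [|n]; [lia|]. simpl.
  replace (r / d * (d * d ^ n)) with (r * d ^ n) by (field; lra).
  apply Rmult_le_compat_l; [lra|]. apply pow_incr; lra.
Qed.

Lemma term_small c a1 a2 a3 a4 a5 q r d : c 0%nat 0%nat 0%nat 0%nat 0%nat = 0 -> 0 < d -> 0 <= r <= d ->
  (forall k, (k < 5)%nat -> Rabs (q k) <= r) ->
  Rabs (c a1 a2 a3 a4 a5 * mono5 a1 a2 a3 a4 a5 q) <= (r / d) * (Rabs (c a1 a2 a3 a4 a5) * mono5 a1 a2 a3 a4 a5 (cst d)).
Proof.
  intros H0 Hd Hr Hq.
  destruct (Nat.eq_dec (a1 + a2 + a3 + a4 + a5) 0) as [E|E].
  - assert (a1 = 0 /\ a2 = 0 /\ a3 = 0 /\ a4 = 0 /\ a5 = 0)%nat as [-> [-> [-> [-> ->]]]] by lia.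
    rewrite H0. rewrite !Rmult_0_l, !Rabs_R0. lra.
  - rewrite Rabs_mult. rewrite mono5_cst.
    assert (M := mono5_abs_le a1 a2 a3 a4 a5 q (cst r) Hq). rewrite mono5_cst in M.
    assert (P := pow_small r d (a1 + a2 + a3 + a4 + a5) Hr Hd ltac:(lia)).
    assert (C := Rabs_pos (c a1 a2 a3 a4 a5)).
    replace (r / d * (Rabs (c a1 a2 a3 a4 a5) * d ^ (a1 + a2 + a3 + a4 + a5))) with
      (Rabs (c a1 a2 a3 a4 a5) * (r / d * d ^ (a1 + a2 + a3 + a4 + a5))) by ring.
    apply Rmult_le_compat_l; auto. lra.
Qed.

Lemma F_small c d F : normal_form_12 c -> series_rep c d F -> 0 < d ->
  forall eps, 0 < eps -> exists rho, 0 < rho /\ rho <= d / 2 /\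
    forall q, (forall k, (k < 5)%nat -> Rabs (q k) <= rho) -> Rabs (F5 F q) <= eps.
Proof.
  intros Hn Hs Hd eps He.
  assert (H0 : c 0%nat 0%nat 0%nat 0%nat 0%nat = 0) by (apply Hn; simpl; lia).
  set (S := Series (fun N => hom_part (abs_coeffs c) N d d d d d)).
  assert (HSs : is_series (fun N => hom_part (abs_coeffs c) N d d d d d) S) by (apply Series_correct; apply Hs).
  assert (S0 : 0 <= S).
  { assert (X : Rabs S <= S).
    { apply (is_series_abs_le (fun N => hom_part (abs_coeffs c) N d d d d d) (fun N => hom_part (abs_coeffs c) N d d d d d) S S); auto.
      intros N. rewrite Rabs_pos_eq. lra. apply habs_pos; lra. }
    assert (Y := Rabs_pos S). lra. }
  set (rho := Rmin (d / 2) (eps * d / (S + 1))).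
  assert (Hr : 0 < rho) by (unfold rho; apply Rmin_pos; [lra| apply Rdiv_lt_0_compat; [nra|lra]]).
  exists rho. split; auto. split; [apply Rmin_l|].
  intros q Hq.
  assert (Hrd : rho <= d / 2) by apply Rmin_l.
  assert (Hre : rho <= eps * d / (S + 1)) by apply Rmin_r.
  assert (Hs1 : is_series (fun N => hom5 c N q) (F5 F q)).
  { apply series_at with d; auto. intros k Hk. assert (X := Hq k Hk). lra. }
  assert (B : Rabs (F5 F q) <= rho / d * S).
  { apply (is_series_abs_le (fun N => hom5 c N q) (fun N => rho / d * hom_part (abs_coeffs c) N d d d d d)); auto.
    exact (is_series_scal (rho / d) _ _ HSs).
    intros N. rewrite hom5_NS, habs_NS. rewrite <- NS_scal.
    eapply Rle_trans; [apply NS_abs|]. apply NS_le; intros. apply term_small; auto. lra. }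
  eapply Rle_trans; [exact B|].
  apply Rle_trans with (eps * d / (S + 1) / d * S).
  { apply Rmult_le_compat_r; auto. unfold Rdiv. apply Rmult_le_compat_r. left; apply Rinv_0_lt_compat; lra. auto. }
  replace (eps * d / (S + 1) / d * S) with (eps * (S / (S + 1))) by (field; lra).
  assert (S / (S + 1) <= 1). { apply Rmult_le_reg_r with (S + 1); [lra|]. unfold Rdiv. rewrite Rmult_assoc, Rinv_l; lra. }
  nra.
Qed.

Definition V5 (x1 y1 x2 y2 u : R) : nat -> R :=
  fun k => match k with 0 => x1 | 1 => y1 | 2 => x2 | 3 => y2 | _ => u end%nat.

Definition Px1 (F : R -> R -> R -> R -> R -> R) (x1 y1 x2 y2 u : R) := Derive (fun t => F t y1 x2 y2 u) x1.
Definition Py1 (F : R -> R -> R -> R -> R -> R) (x1 y1 x2 y2 u : R) := Derive (fun t => F x1 t x2 y2 u) y1.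
Definition Px2 (F : R -> R -> R -> R -> R -> R) (x1 y1 x2 y2 u : R) := Derive (fun t => F x1 y1 t y2 u) x2.
Definition Py2 (F : R -> R -> R -> R -> R -> R) (x1 y1 x2 y2 u : R) := Derive (fun t => F x1 y1 x2 t u) y2.
Definition Pu (F : R -> R -> R -> R -> R -> R) (x1 y1 x2 y2 u : R) := Derive (fun t => F x1 y1 x2 y2 t) u.

Definition inbox5 (r x1 y1 x2 y2 u : R) : Prop :=
  Rabs x1 < r /\ Rabs y1 < r /\ Rabs x2 < r /\ Rabs y2 < r /\ Rabs u < r.

Lemma V5_lt r x1 y1 x2 y2 u : inbox5 r x1 y1 x2 y2 u ->
  forall k, (k < 5)%nat -> Rabs (V5 x1 y1 x2 y2 u k) < r.
Proof.
  intros (A & B & C & D & E) k Hk. destruct k as [|[|[|[|[|k]]]]]; simpl; auto; lia.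
Qed.

Lemma exd_all c d F x1 y1 x2 y2 u : series_rep c d F -> inbox5 d x1 y1 x2 y2 u ->
  ex_derive (fun t => F t y1 x2 y2 u) x1 /\ ex_derive (fun t => F x1 t x2 y2 u) y1 /\
  ex_derive (fun t => F x1 y1 t y2 u) x2 /\ ex_derive (fun t => F x1 y1 x2 t u) y2 /\
  ex_derive (fun t => F x1 y1 x2 y2 t) u.
Proof.
  intros Hs Hb. assert (H := V5_lt _ _ _ _ _ _ Hb).
  repeat split.
  - exact (F_is_derive c d F (V5 x1 y1 x2 y2 u) 0 Hs H ltac:(lia)).
  - exact (F_is_derive c d F (V5 x1 y1 x2 y2 u) 1 Hs H ltac:(lia)).
  - exact (F_is_derive c d F (V5 x1 y1 x2 y2 u) 2 Hs H ltac:(lia)).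
  - exact (F_is_derive c d F (V5 x1 y1 x2 y2 u) 3 Hs H ltac:(lia)).
  - exact (F_is_derive c d F (V5 x1 y1 x2 y2 u) 4 Hs H ltac:(lia)).
Qed.

Lemma Derive_minus_cst (f : R -> R) x v : ex_derive f x -> Derive (fun t => f t - v) x = Derive f x.
Proof.
  intros H. rewrite Derive_minus; auto. rewrite Derive_const. ring. apply ex_derive_const.
Qed.

Lemma Re_applyZ M G p : Re (applyZ M G p) =
  Re (vf M 0 p) * (d_x1 G p / 2) + Im (vf M 0 p) * (d_y1 G p / 2) +
  Re (vf M 1 p) * (d_x2 G p / 2) + Im (vf M 1 p) * (d_y2 G p / 2) +
  Re (vf M 2 p) * (d_u G p / 2) + Im (vf M 2 p) * (d_v G p / 2).
Proof. unfold applyZ, wirt, Re, Im. simpl. lra. Qed.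

Lemma Re_applyZ_F M F x1 y1 x2 y2 u v : 
  ex_derive (fun t => F t y1 x2 y2 u) x1 -> ex_derive (fun t => F x1 t x2 y2 u) y1 ->
  ex_derive (fun t => F x1 y1 t y2 u) x2 -> ex_derive (fun t => F x1 y1 x2 t u) y2 ->
  ex_derive (fun t => F x1 y1 x2 y2 t) u ->
  let p := mkpt x1 y1 x2 y2 u v in
  Re (applyZ M (Phi F) p) =
  Re (vf M 0 p) * (Px1 F x1 y1 x2 y2 u / 2) + Im (vf M 0 p) * (Py1 F x1 y1 x2 y2 u / 2) +
  Re (vf M 1 p) * (Px2 F x1 y1 x2 y2 u / 2) + Im (vf M 1 p) * (Py2 F x1 y1 x2 y2 u / 2) +
  Re (vf M 2 p) * (Pu F x1 y1 x2 y2 u / 2) + Im (vf M 2 p) * (-1 / 2).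
Proof.
  intros H1 H2 H3 H4 H5 p. rewrite Re_applyZ.
  assert (E1' : d_x1 (Phi F) p = Px1 F x1 y1 x2 y2 u).
  { unfold d_x1, Phi, p, Px1. unfold x1_, y1_, x2_, y2_, u_, v_, z1_, z2_, w_, Re, Im, mkpt. simpl. apply Derive_minus_cst; auto. }
  assert (E2' : d_y1 (Phi F) p = Py1 F x1 y1 x2 y2 u).
  { unfold d_y1, Phi, p, Py1. unfold x1_, y1_, x2_, y2_, u_, v_, z1_, z2_, w_, Re, Im, mkpt. simpl. apply Derive_minus_cst; auto. }
  assert (E3' : d_x2 (Phi F) p = Px2 F x1 y1 x2 y2 u).
  { unfold d_x2, Phi, p, Px2. unfold x1_, y1_, x2_, y2_, u_, v_, z1_, z2_, w_, Re, Im, mkpt. simpl. apply Derive_minus_cst; auto. }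
  assert (E4' : d_y2 (Phi F) p = Py2 F x1 y1 x2 y2 u).
  { unfold d_y2, Phi, p, Py2. unfold x1_, y1_, x2_, y2_, u_, v_, z1_, z2_, w_, Re, Im, mkpt. simpl. apply Derive_minus_cst; auto. }
  assert (E5' : d_u (Phi F) p = Pu F x1 y1 x2 y2 u).
  { unfold d_u, Phi, p, Pu. unfold x1_, y1_, x2_, y2_, u_, v_, z1_, z2_, w_, Re, Im, mkpt. simpl. apply Derive_minus_cst; auto. }
  assert (E6' : d_v (Phi F) p = -1).
  { unfold d_v, Phi, p. unfold x1_, y1_, x2_, y2_, u_, v_, z1_, z2_, w_, Re, Im, mkpt. simpl. rewrite Derive_minus. rewrite Derive_const, Derive_id. ring.
    apply ex_derive_const. apply ex_derive_id. }
  rewrite E1', E2', E3', E4', E5', E6'. reflexivity.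
Qed.

Lemma in_g_gen t1 t7 t8 m1 (M : cmat) k1 k2 k3 k4 k5 :
  (forall i j, M i j = Cplus (Cplus (Cplus (Cplus
              (Cmult (RtoC k1) (E1 t1 t7 t8 m1 i j))
              (Cmult (RtoC k2) (E2 i j)))
              (Cmult (RtoC k3) (E3 t7 m1 i j)))
              (Cmult (RtoC k4) (E4 t7 m1 i j)))
              (Cmult (RtoC k5) (E5 i j))) -> in_g t1 t7 t8 m1 M.
Proof. intros H. exists k1, k2, k3, k4, k5. exact H. Qed.

Lemma Ceq (a b : C) : fst a = fst b -> snd a = snd b -> a = b.
Proof. destruct a, b; simpl; intros; subst; reflexivity. Qed.

Ltac in_g_tac k1 k2 k3 k4 k5 :=
  apply (in_g_gen _ _ _ _ _ k1 k2 k3 k4 k5); intros i j;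
  apply Ceq; unfold Cplus, Cmult, RtoC; simpl; ring.

Lemma gE1 t1 t7 t8 m1 : in_g t1 t7 t8 m1 (E1 t1 t7 t8 m1).
Proof. in_g_tac 1 0 0 0 0. Qed.
Lemma gE2 t1 t7 t8 m1 : in_g t1 t7 t8 m1 E2.
Proof. in_g_tac 0 1 0 0 0. Qed.
Lemma gE3 t1 t7 t8 m1 : in_g t1 t7 t8 m1 (E3 t7 m1).
Proof. in_g_tac 0 0 1 0 0. Qed.
Lemma gE4 t1 t7 t8 m1 : in_g t1 t7 t8 m1 (E4 t7 m1).
Proof. in_g_tac 0 0 0 1 0. Qed.
Lemma gE5 t1 t7 t8 m1 : in_g t1 t7 t8 m1 E5.
Proof. in_g_tac 0 0 0 0 1. Qed.

Ltac unfold_pt := unfold vf, x1_, y1_, x2_, y2_, u_, v_, z1_, z2_, w_, Re, Im, mkpt, Cplus, Cmult, RtoC in *.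

Lemma tangency_eqs t1 t7 t8 m1 F d x1 y1 x2 y2 u :
  integral_variety_12 (in_g t1 t7 t8 m1) F d -> inbox5 d x1 y1 x2 y2 u ->
  Rabs (F x1 y1 x2 y2 u) < d ->
  Py1 F x1 y1 x2 y2 u = 0 /\ Pu F x1 y1 x2 y2 u = 0 /\
  Px2 F x1 y1 x2 y2 u = x2 * (2 + (m1 - t7) * Px1 F x1 y1 x2 y2 u) /\
  Py2 F x1 y1 x2 y2 u = y2 * (2 + (m1 - t7) * Px1 F x1 y1 x2 y2 u) /\
  (t1 * x1 - (- (1/2) * (m1 - t7) * (t1 - 2 * t7)) * F x1 y1 x2 y2 u + 1
     + t7 * (m1 - t7) * (x2 ^ 2 + y2 ^ 2)) * Px1 F x1 y1 x2 y2 u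
   = 4 * x1 + 2 * m1 * F x1 y1 x2 y2 u - 2 * t7 * (x2 ^ 2 + y2 ^ 2).
Proof.
  intros [Hd [[c [Hn Hs]] Ht]] Hb HF.
  destruct (exd_all c d F x1 y1 x2 y2 u Hs Hb) as (D1 & D2 & D3 & D4 & D5).
  set (p := mkpt x1 y1 x2 y2 u (F x1 y1 x2 y2 u)).
  assert (HM : Mset F d p).
  { destruct Hb as (B1 & B2 & B3 & B4 & B5). split. repeat split; auto. reflexivity. }
  assert (Z := fun M (HgM : in_g t1 t7 t8 m1 M) => Ht M HgM p HM).
  pose proof (Z _ (gE1 t1 t7 t8 m1)) as e1.
  pose proof (Z _ (gE2 t1 t7 t8 m1)) as e2.
  pose proof (Z _ (gE3 t1 t7 t8 m1)) as e3.
  pose proof (Z _ (gE4 t1 t7 t8 m1)) as e4.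
  pose proof (Z _ (gE5 t1 t7 t8 m1)) as e5.
  unfold p in e1, e2, e3, e4, e5.
  rewrite Re_applyZ_F in e1, e2, e3, e4, e5 by auto.
  unfold E1, E2, E3, E4, E5 in *. unfold_pt. simpl in e1, e2, e3, e4, e5.
  set (a := Px1 F x1 y1 x2 y2 u) in *. set (b := Py1 F x1 y1 x2 y2 u) in *.
  set (cc := Px2 F x1 y1 x2 y2 u) in *. set (dd := Py2 F x1 y1 x2 y2 u) in *.
  set (e := Pu F x1 y1 x2 y2 u) in *. set (f := F x1 y1 x2 y2 u) in *.
  assert (Hb0 : b = 0) by lra.
  assert (He0 : e = 0) by lra.
  subst b e.
  assert (Hc : cc = x2 * (2 + (m1 - t7) * a)) by nra.
  assert (Hdd : dd = y2 * (2 + (m1 - t7) * a)) by nra.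
  repeat split; auto.
  rewrite Hc, Hdd in e1. nra.
Qed.

Lemma is_derive_eq (f : R -> R) (x l l' : R) : is_derive f x l -> @eq R l l' -> is_derive f x l'.
Proof. intros H <-; auto. Qed.

Lemma is_derive_cont (f : R -> R) x l : is_derive f x l -> continuity_pt f x.
Proof.
  intros H. apply continuity_pt_filterlim. exact (@ex_derive_continuous R_AbsRing R_NormedModule f x (ex_intro _ l H)).
Qed.

Lemma uniq1d_pos (g beta : R -> R) b M : 0 <= b ->
  (forall s, 0 <= s <= b -> is_derive g s (beta s * g s) /\ Rabs (beta s) <= M) ->
  g 0 = 0 -> g b = 0.
Proof.
  intros Hb H H0.
  set (h := fun s => g s * g s * exp (- (2 * M) * s)).
  set (dh := fun s => 2 * (g s * g s) * (beta s - M) * exp (- (2 * M) * s)).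
  assert (Dh : forall s, 0 <= s <= b -> is_derive h s (dh s)).
  { intros s Hs. destruct (H s Hs) as [Hg _].
    unfold h, dh.
    assert (Hm : is_derive (fun s => g s * g s) s (2 * beta s * g s * g s)).
    { eapply is_derive_eq. apply (is_derive_mult g g s _ _ Hg Hg). intros; apply Rmult_comm.
      unfold plus, mult; simpl. ring. }
    assert (He : is_derive (fun s => exp (- (2 * M) * s)) s (- (2 * M) * exp (- (2 * M) * s))).
    { auto_derive; auto. ring. }
    eapply is_derive_eq. apply (is_derive_mult _ _ s _ _ Hm He). intros; apply Rmult_comm.
    unfold plus, mult; simpl. ring. }
  destruct (MVT_gen h 0 b dh) as [cc [Hc Hval]].
  { intros x Hx. rewrite Rmin_left, Rmax_right in Hx by lra. apply Dh; lra. }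
  { intros x Hx. rewrite Rmin_left, Rmax_right in Hx by lra. eapply is_derive_cont. apply Dh; lra. }
  rewrite Rmin_left, Rmax_right in Hc by lra.
  assert (Hdh : dh cc <= 0).
  { unfold dh. destruct (H cc Hc) as [_ Hbeta].
    assert (beta cc - M <= 0) by (assert (X := Rle_abs (beta cc)); lra).
    assert (0 <= g cc * g cc) by nra. assert (0 < exp (- (2 * M) * cc)) by apply exp_pos. 
    assert (0 <= 2 * (g cc * g cc) * exp (- (2 * M) * cc)) by nra. nra. }
  assert (Hh0 : h 0 = 0) by (unfold h; rewrite H0; ring).
  assert (Hhb : h b <= 0) by nra.
  unfold h in Hhb. assert (0 < exp (- (2 * M) * b)) by apply exp_pos.
  assert (g b * g b <= 0) by (apply Rmult_le_reg_r with (exp (- (2 * M) * b)); auto; lra).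
  nra.
Qed.

Lemma uniq1d (g beta : R -> R) b M :
  (forall s, Rabs s <= Rabs b -> is_derive g s (beta s * g s) /\ Rabs (beta s) <= M) ->
  g 0 = 0 -> g b = 0.
Proof.
  intros H H0. destruct (Rle_dec 0 b) as [Hb|Hb].
  - apply (uniq1d_pos g beta b M Hb); auto. intros s Hs. apply H. rewrite !Rabs_pos_eq; lra.
  - set (g' := fun s => g (- s)). set (beta' := fun s => - beta (- s)).
    assert (E : g b = g' (- b)) by (unfold g'; f_equal; ring). rewrite E.
    apply (uniq1d_pos g' beta' (- b) M); [lra| |unfold g'; rewrite Ropp_0; auto].
    intros s Hs. destruct (H (- s)) as [Hd Hbeta].
    { rewrite Rabs_Ropp, Rabs_pos_eq, Rabs_left; lra. }
    split.
    + unfold g', beta'. eapply is_derive_eq. apply (is_derive_comp g (fun s => - s)). exact Hd.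
      instantiate (1 := -1). auto_derive; auto. unfold scal; simpl; unfold mult; simpl. ring.
    + unfold beta'. rewrite Rabs_Ropp. auto.
Qed.

Lemma is_derive_c (c x : R) : is_derive (fun _ => c) x 0.
Proof. eapply is_derive_eq; [apply is_derive_const| reflexivity]. Qed.
Lemma is_derive_i (x : R) : is_derive (fun s => s) x 1.
Proof. eapply is_derive_eq; [apply is_derive_id| reflexivity]. Qed.

Lemma line_deriv A B k f (phi psi chi : R -> R) psi' chi' s :
  (forall X, 1 + A * X > 0 -> is_derive f X ((4 * X + 2 * B * f X) / (1 + A * X))) ->
  ex_derive phi s -> is_derive psi s psi' -> is_derive chi s chi' ->
  1 + A * (chi s + k / 2 * phi s) > 0 ->
  is_derive (fun s => phi s - psi s - f (chi s + k / 2 * phi s)) s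
   (Derive phi s - psi' - (4 * (chi s + k / 2 * phi s) + 2 * B * f (chi s + k / 2 * phi s))
       / (1 + A * (chi s + k / 2 * phi s)) * (chi' + k / 2 * Derive phi s)).
Proof.
  intros Hf Hphi Hpsi Hchi HX.
  assert (Dphi := Derive_correct _ _ Hphi).
  assert (Hin : is_derive (fun s => chi s + k / 2 * phi s) s (chi' + k / 2 * Derive phi s)).
  { eapply is_derive_eq. apply (is_derive_plus chi (fun s => k / 2 * phi s)). exact Hchi.
    apply (is_derive_scal phi s (k/2)). exact Dphi. reflexivity. }
  assert (Hc := is_derive_comp f (fun s => chi s + k / 2 * phi s) s _ _ (Hf _ HX) Hin).
  eapply is_derive_eq.
  apply (is_derive_minus (fun s => phi s - psi s) (fun s => f (chi s + k / 2 * phi s))).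
  apply (is_derive_minus phi psi s _ _ Dphi Hpsi). exact Hc.
  unfold minus, plus, opp, scal; simpl; unfold mult; simpl. ring.
Qed.

Definition kk (t7 m1 : R) := m1 - t7.
Definition gmm (t1 t7 m1 : R) := - (1/2) * (m1 - t7) * (t1 - 2 * t7).
Definition AA (t1 t7 m1 : R) := t1 + 2 * (m1 - t7).
Definition D0f (t1 t7 m1 x1 r F : R) := t1 * x1 - gmm t1 t7 m1 * F + 1 + t7 * (m1 - t7) * r.
Definition N0f (t1 t7 m1 x1 r F : R) := 4 * x1 + 2 * m1 * F - 2 * t7 * r.
Definition beta0 (t1 t7 m1 x1 r F : R) :=
  t7 * ((m1 - t7) * N0f t1 t7 m1 x1 r F + 2 * D0f t1 t7 m1 x1 r F) /
  (D0f t1 t7 m1 x1 r F * (1 + AA t1 t7 m1 * (x1 + (m1 - t7) / 2 * F))).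

Lemma alg_x1 t1 t7 m1 x1 r F fX P :
  D0f t1 t7 m1 x1 r F * P = N0f t1 t7 m1 x1 r F -> D0f t1 t7 m1 x1 r F <> 0 ->
  1 + AA t1 t7 m1 * (x1 + (m1 - t7) / 2 * F) <> 0 ->
  P - (4 * (x1 + (m1 - t7) / 2 * F) + 2 * t7 * fX) / (1 + AA t1 t7 m1 * (x1 + (m1 - t7) / 2 * F))
      * (1 + (m1 - t7) / 2 * P)
   = beta0 t1 t7 m1 x1 r F * (F - r - fX).
Proof.
  intros HP HD HA.
  assert (E : P = N0f t1 t7 m1 x1 r F / D0f t1 t7 m1 x1 r F).
  { rewrite <- HP. field. auto. }
  rewrite E. unfold beta0. unfold D0f, N0f, AA, gmm in *. field. split; [intro Hc; apply HA; lra | intro Hc; apply HD; lra].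
Qed.

Definition Lfun (F : R -> R -> R -> R -> R -> R) (f : R -> R) (k x1 y1 x2 y2 u : R) : R :=
  F x1 y1 x2 y2 u - (x2 ^ 2 + y2 ^ 2) - f (x1 + k / 2 * F x1 y1 x2 y2 u).

Definition cbox (r x1 y1 x2 y2 u : R) : Prop :=
  Rabs x1 <= r /\ Rabs y1 <= r /\ Rabs x2 <= r /\ Rabs y2 <= r /\ Rabs u <= r.

Lemma F_zero c d F : normal_form_12 c -> series_rep c d F -> 0 < d -> F 0 0 0 0 0 = 0.
Proof.
  intros Hn Hs Hd.
  assert (H : forall eps, 0 < eps -> Rabs (F 0 0 0 0 0) <= eps).
  { intros eps He. destruct (F_small c d F Hn Hs Hd eps He) as [rho [Hr [_ H]]].
    apply (H (cst 0)). intros k _. unfold cst. rewrite Rabs_R0. lra. }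
  destruct (Req_dec (F 0 0 0 0 0) 0) as [E|E]; auto.
  assert (P := Rabs_pos_lt _ E). assert (Q : 0 < Rabs (F 0 0 0 0 0) / 2) by lra. specialize (H _ Q). lra.
Qed.

Section Reduction.
Variables (t1 t7 t8 m1 : R) (F : R -> R -> R -> R -> R -> R) (d : R) (f : R -> R).
Hypothesis HV : integral_variety_12 (in_g t1 t7 t8 m1) F d.
Hypothesis Hf0 : f 0 = 0.
Hypothesis Hfd : forall X, 1 + AA t1 t7 m1 * X > 0 ->
  is_derive f X ((4 * X + 2 * t7 * f X) / (1 + AA t1 t7 m1 * X)).

Let k := m1 - t7.
Let A := AA t1 t7 m1.

Lemma Hser : exists c, normal_form_12 c /\ series_rep c d F.
Proof. destruct HV as [_ [H _]]; auto. Qed.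
Lemma Hd : 0 < d.
Proof. destruct HV; auto. Qed.

Lemma F00 : F 0 0 0 0 0 = 0.
Proof. destruct Hser as [c [Hn Hs]]. apply (F_zero c d F Hn Hs Hd). Qed.

Hypothesis rho M0 : R.
Hypothesis Hrho : 0 < rho < d.
Hypothesis Hbox : forall x1 y1 x2 y2 u, cbox rho x1 y1 x2 y2 u ->
  Rabs (F x1 y1 x2 y2 u) < d /\ D0f t1 t7 m1 x1 (x2 ^ 2 + y2 ^ 2) (F x1 y1 x2 y2 u) <> 0 /\
  1 + A * (x1 + k / 2 * F x1 y1 x2 y2 u) > 0 /\
  Rabs (beta0 t1 t7 m1 x1 (x2 ^ 2 + y2 ^ 2) (F x1 y1 x2 y2 u)) <= M0.

Lemma cbox_inbox x1 y1 x2 y2 u : cbox rho x1 y1 x2 y2 u -> inbox5 d x1 y1 x2 y2 u.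
Proof. intros (a & b & c & e & g). repeat split; lra. Qed.

Lemma exd_box x1 y1 x2 y2 u : cbox rho x1 y1 x2 y2 u ->
  ex_derive (fun t => F t y1 x2 y2 u) x1 /\ ex_derive (fun t => F x1 t x2 y2 u) y1 /\
  ex_derive (fun t => F x1 y1 t y2 u) x2 /\ ex_derive (fun t => F x1 y1 x2 t u) y2 /\
  ex_derive (fun t => F x1 y1 x2 y2 t) u.
Proof.
  intros H. destruct Hser as [c [_ Hs]]. apply (exd_all c d F); auto. apply cbox_inbox; auto.
Qed.

Lemma eqs_box x1 y1 x2 y2 u : cbox rho x1 y1 x2 y2 u ->
  Py1 F x1 y1 x2 y2 u = 0 /\ Pu F x1 y1 x2 y2 u = 0 /\
  Px2 F x1 y1 x2 y2 u = x2 * (2 + (m1 - t7) * Px1 F x1 y1 x2 y2 u) /\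
  Py2 F x1 y1 x2 y2 u = y2 * (2 + (m1 - t7) * Px1 F x1 y1 x2 y2 u) /\
  D0f t1 t7 m1 x1 (x2 ^ 2 + y2 ^ 2) (F x1 y1 x2 y2 u) * Px1 F x1 y1 x2 y2 u
   = N0f t1 t7 m1 x1 (x2 ^ 2 + y2 ^ 2) (F x1 y1 x2 y2 u).
Proof.
  intros H. destruct (tangency_eqs t1 t7 t8 m1 F d x1 y1 x2 y2 u HV (cbox_inbox _ _ _ _ _ H) (proj1 (Hbox _ _ _ _ _ H)))
    as (e1 & e2 & e3 & e4 & e5).
  repeat split; auto.
Qed.

Lemma dL_x1 x1 y1 x2 y2 u : cbox rho x1 y1 x2 y2 u ->
  is_derive (fun s => Lfun F f k s y1 x2 y2 u) x1
    (beta0 t1 t7 m1 x1 (x2 ^ 2 + y2 ^ 2) (F x1 y1 x2 y2 u) * Lfun F f k x1 y1 x2 y2 u).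
Proof.
  intros H. destruct (exd_box _ _ _ _ _ H) as (D1 & _).
  destruct (Hbox _ _ _ _ _ H) as (_ & HD & HA & _).
  destruct (eqs_box _ _ _ _ _ H) as (_ & _ & _ & _ & E).
  eapply is_derive_eq.
  apply (line_deriv A t7 k f (fun s => F s y1 x2 y2 u) (fun _ => x2 ^ 2 + y2 ^ 2) (fun s => s) 0 1 x1 Hfd D1).
  apply is_derive_c. apply is_derive_i. exact HA.
  fold (Px1 F x1 y1 x2 y2 u). unfold Lfun. rewrite <- alg_x1 with (P := Px1 F x1 y1 x2 y2 u); auto.
  - unfold k, A. ring.
  - unfold A in HA. unfold k in HA. lra.
Qed.

Lemma dL_y1 x1 y1 x2 y2 u : cbox rho x1 y1 x2 y2 u ->
  is_derive (fun s => Lfun F f k x1 s x2 y2 u) y1 (0 * Lfun F f k x1 y1 x2 y2 u).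
Proof.
  intros H. destruct (exd_box _ _ _ _ _ H) as (_ & D2 & _).
  destruct (Hbox _ _ _ _ _ H) as (_ & HD & HA & _).
  destruct (eqs_box _ _ _ _ _ H) as (E & _).
  eapply is_derive_eq.
  apply (line_deriv A t7 k f (fun s => F x1 s x2 y2 u) (fun _ => x2 ^ 2 + y2 ^ 2) (fun _ => x1) 0 0 y1 Hfd D2).
  apply is_derive_c. apply is_derive_c. exact HA.
  fold (Py1 F x1 y1 x2 y2 u). rewrite E. ring.
Qed.

Lemma dL_u x1 y1 x2 y2 u : cbox rho x1 y1 x2 y2 u ->
  is_derive (fun s => Lfun F f k x1 y1 x2 y2 s) u (0 * Lfun F f k x1 y1 x2 y2 u).
Proof.
  intros H. destruct (exd_box _ _ _ _ _ H) as (_ & _ & _ & _ & D5).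
  destruct (Hbox _ _ _ _ _ H) as (_ & HD & HA & _).
  destruct (eqs_box _ _ _ _ _ H) as (_ & E & _).
  eapply is_derive_eq.
  apply (line_deriv A t7 k f (fun s => F x1 y1 x2 y2 s) (fun _ => x2 ^ 2 + y2 ^ 2) (fun _ => x1) 0 0 u Hfd D5).
  apply is_derive_c. apply is_derive_c. exact HA.
  fold (Pu F x1 y1 x2 y2 u). rewrite E. ring.
Qed.

Lemma dL_x2 x1 y1 x2 y2 u : cbox rho x1 y1 x2 y2 u ->
  is_derive (fun s => Lfun F f k x1 y1 s y2 u) x2
    ((k * x2 * beta0 t1 t7 m1 x1 (x2 ^ 2 + y2 ^ 2) (F x1 y1 x2 y2 u)) * Lfun F f k x1 y1 x2 y2 u).
Proof.
  intros H. destruct (exd_box _ _ _ _ _ H) as (_ & _ & D3 & _).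
  destruct (Hbox _ _ _ _ _ H) as (_ & HD & HA & _).
  destruct (eqs_box _ _ _ _ _ H) as (_ & _ & E3 & _ & E).
  eapply is_derive_eq.
  apply (line_deriv A t7 k f (fun s => F x1 y1 s y2 u) (fun s => s ^ 2 + y2 ^ 2) (fun _ => x1) (2 * x2) 0 x2 Hfd D3).
  auto_derive; auto; ring. apply is_derive_c. exact HA.
  fold (Px2 F x1 y1 x2 y2 u). rewrite E3.
  unfold k, A in *.
  assert (Q := alg_x1 t1 t7 m1 x1 (x2 ^ 2 + y2 ^ 2) (F x1 y1 x2 y2 u) (f (x1 + (m1 - t7) / 2 * F x1 y1 x2 y2 u)) (Px1 F x1 y1 x2 y2 u) E HD).
  specialize (Q ltac:(lra)). unfold Lfun.
  match goal with |- _ = ?a * ?b * ?c * ?L => transitivity (a * b * (c * L)); [|ring] end.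
  rewrite <- Q. match goal with |- context [?a / (1 + ?b)] => set (W := a / (1 + b)) end. field.
Qed.

Lemma dL_y2 x1 y1 x2 y2 u : cbox rho x1 y1 x2 y2 u ->
  is_derive (fun s => Lfun F f k x1 y1 x2 s u) y2
    ((k * y2 * beta0 t1 t7 m1 x1 (x2 ^ 2 + y2 ^ 2) (F x1 y1 x2 y2 u)) * Lfun F f k x1 y1 x2 y2 u).
Proof.
  intros H. destruct (exd_box _ _ _ _ _ H) as (_ & _ & _ & D4 & _).
  destruct (Hbox _ _ _ _ _ H) as (_ & HD & HA & _).
  destruct (eqs_box _ _ _ _ _ H) as (_ & _ & _ & E4 & E).
  eapply is_derive_eq.
  apply (line_deriv A t7 k f (fun s => F x1 y1 x2 s u) (fun s => x2 ^ 2 + s ^ 2) (fun _ => x1) (2 * y2) 0 y2 Hfd D4).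
  auto_derive; auto; ring. apply is_derive_c. exact HA.
  fold (Py2 F x1 y1 x2 y2 u). rewrite E4.
  unfold k, A in *.
  assert (Q := alg_x1 t1 t7 m1 x1 (x2 ^ 2 + y2 ^ 2) (F x1 y1 x2 y2 u) (f (x1 + (m1 - t7) / 2 * F x1 y1 x2 y2 u)) (Px1 F x1 y1 x2 y2 u) E HD).
  specialize (Q ltac:(lra)). unfold Lfun.
  match goal with |- _ = ?a * ?b * ?c * ?L => transitivity (a * b * (c * L)); [|ring] end.
  rewrite <- Q. match goal with |- context [?a / (1 + ?b)] => set (W := a / (1 + b)) end. field.
Qed.

Lemma L_zero x1 y1 x2 y2 u : cbox rho x1 y1 x2 y2 u -> Lfun F f k x1 y1 x2 y2 u = 0.
Proof.
  intros (B1 & B2 & B3 & B4 & B5).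
  assert (S1 : Lfun F f k x1 0 0 0 0 = 0).
  { apply (uniq1d (fun s => Lfun F f k s 0 0 0 0) (fun s => beta0 t1 t7 m1 s (0 ^ 2 + 0 ^ 2) (F s 0 0 0 0)) x1 M0).
    intros s Hs. assert (Hc : cbox rho s 0 0 0 0) by (repeat split; rewrite ?Rabs_R0; lra).
    split. apply dL_x1; auto. apply (Hbox _ _ _ _ _ Hc).
    unfold Lfun. rewrite F00, Rmult_0_r, Rplus_0_r, Hf0. simpl; ring. }
  assert (S2 : Lfun F f k x1 y1 0 0 0 = 0).
  { apply (uniq1d (fun s => Lfun F f k x1 s 0 0 0) (fun _ => 0) y1 0); auto.
    intros s Hs. assert (Hc : cbox rho x1 s 0 0 0) by (repeat split; rewrite ?Rabs_R0; lra).
    split. apply dL_y1; auto. rewrite Rabs_R0; lra. }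
  assert (S3 : Lfun F f k x1 y1 x2 0 0 = 0).
  { apply (uniq1d (fun s => Lfun F f k x1 y1 s 0 0)
       (fun s => k * s * beta0 t1 t7 m1 x1 (s ^ 2 + 0 ^ 2) (F x1 y1 s 0 0)) x2 (Rabs k * rho * M0)); auto.
    intros s Hs. assert (Hc : cbox rho x1 y1 s 0 0) by (repeat split; rewrite ?Rabs_R0; lra).
    split. apply dL_x2; auto.
    destruct (Hbox _ _ _ _ _ Hc) as (_ & _ & _ & Hb).
    rewrite !Rabs_mult. apply Rmult_le_compat; try apply Rabs_pos.
    apply Rmult_le_pos; apply Rabs_pos. apply Rmult_le_compat_l. apply Rabs_pos. lra. auto. }
  assert (S4 : Lfun F f k x1 y1 x2 y2 0 = 0).
  { apply (uniq1d (fun s => Lfun F f k x1 y1 x2 s 0)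
       (fun s => k * s * beta0 t1 t7 m1 x1 (x2 ^ 2 + s ^ 2) (F x1 y1 x2 s 0)) y2 (Rabs k * rho * M0)); auto.
    intros s Hs. assert (Hc : cbox rho x1 y1 x2 s 0) by (repeat split; rewrite ?Rabs_R0; lra).
    split. apply dL_y2; auto.
    destruct (Hbox _ _ _ _ _ Hc) as (_ & _ & _ & Hb).
    rewrite !Rabs_mult. apply Rmult_le_compat; try apply Rabs_pos.
    apply Rmult_le_pos; apply Rabs_pos. apply Rmult_le_compat_l. apply Rabs_pos. lra. auto. }
  apply (uniq1d (fun s => Lfun F f k x1 y1 x2 y2 s) (fun _ => 0) u 0); auto.
  intros s Hs. assert (Hc : cbox rho x1 y1 x2 y2 s) by (repeat split; lra).
  split. apply dL_u; auto. rewrite Rabs_R0; lra.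
Qed.

End Reduction.

Lemma abs_split a b : Rabs a <= b -> - b <= a <= b.
Proof. unfold Rabs; destruct (Rcase_abs a); intros; split; lra. Qed.
Lemma abs_splitl a b : Rabs a < b -> - b < a < b.
Proof. unfold Rabs; destruct (Rcase_abs a); intros; split; lra. Qed.

Lemma cont0 (f : R -> R) l : is_derive f 0 l -> f 0 = 0 ->
  forall eps, 0 < eps -> exists del, 0 < del /\ forall X, Rabs X < del -> Rabs (f X) < eps.
Proof.
  intros H H0 eps He. assert (C := is_derive_cont f 0 l H).
  destruct (C eps He) as [alp [Ha Hc]]. exists alp. split; auto.
  intros X HX. destruct (Req_dec X 0) as [->|NX].
  - rewrite H0, Rabs_R0; auto.
  - specialize (Hc X). simpl in Hc. unfold R_dist in Hc. rewrite H0, !Rminus_0_r in Hc.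
    apply Hc. split. split. exact I. auto. auto.
Qed.

Lemma Rabs_mult_le a b A B : Rabs a <= A -> Rabs b <= B -> Rabs (a * b) <= A * B.
Proof. intros; rewrite Rabs_mult; apply Rmult_le_compat; auto; apply Rabs_pos. Qed.

Lemma reduction t1 t7 t8 m1 F d f :
  integral_variety_12 (in_g t1 t7 t8 m1) F d -> f 0 = 0 ->
  (forall X, 1 + AA t1 t7 m1 * X > 0 ->
     is_derive f X ((4 * X + 2 * t7 * f X) / (1 + AA t1 t7 m1 * X))) ->
  exists d', 0 < d' <= d /\ forall x1 y1 x2 y2 u v,
    Rabs x1 < d' -> Rabs y1 < d' -> Rabs x2 < d' -> Rabs y2 < d' -> Rabs u < d' -> Rabs v < d' ->
    1 + AA t1 t7 m1 * (x1 + (m1 - t7) / 2 * v) > 0 /\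
    (v = F x1 y1 x2 y2 u <-> v = x2 ^ 2 + y2 ^ 2 + f (x1 + (m1 - t7) / 2 * v)).
Proof.
  intros HV Hf0 Hfd.
  set (k := m1 - t7). set (A := AA t1 t7 m1). set (gm := gmm t1 t7 m1).
  assert (Hd := Hd t1 t7 t8 m1 F d HV).
  destruct (Hser t1 t7 t8 m1 F d HV) as [c [Hn Hs]].
  set (ef := / (8 * (Rabs t7 + 1) * (Rabs k + 1))).
  assert (Hef : 0 < ef) by (unfold ef; apply Rinv_0_lt_compat; assert (X1:=Rabs_pos t7); assert (X2:=Rabs_pos k); nra).
  assert (D0' : 1 + A * 0 > 0) by lra.
  destruct (cont0 f _ (Hfd 0 D0') Hf0 ef Hef) as [dc [Hdc Hc]].
  assert (Pk := Rabs_pos k). assert (PA := Rabs_pos A). assert (P7 := Rabs_pos t7).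
  assert (Pg := Rabs_pos gm). assert (P1 := Rabs_pos t1). assert (Pm := Rabs_pos m1).
  set (df := Rmin (dc / 2) (Rmin (/ (16 * (Rabs k + 1))) (/ (2 * (Rabs A + 1))))).
  assert (Hdf : 0 < df).
  { unfold df. repeat apply Rmin_pos; try lra; apply Rinv_0_lt_compat; lra. }
  assert (Hdf1 : df <= dc / 2) by apply Rmin_l.
  assert (Hdf2 : df <= / (16 * (Rabs k + 1))) by (eapply Rle_trans; [apply Rmin_r|apply Rmin_l]).
  assert (Hdf3 : df <= / (2 * (Rabs A + 1))) by (eapply Rle_trans; [apply Rmin_r|apply Rmin_r]).
  assert (FX : forall X, Rabs X <= df -> 1 + A * X >= 1/2 /\ Rabs (f X) < ef).
  { intros X HX. split.
    - assert (Rabs (A * X) <= 1/2).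
      { rewrite Rabs_mult. apply Rle_trans with (Rabs A * / (2 * (Rabs A + 1))).
        apply Rmult_le_compat_l; auto; lra.
        apply Rmult_le_reg_r with (2 * (Rabs A + 1)). lra.
        rewrite Rmult_assoc, Rinv_l by lra. lra. }
      apply abs_split in H. lra.
    - apply Hc. lra. }
  set (eta := Rmin (d / 2) (Rmin (df / (Rabs k + 2)) (Rmin (/ (8 * (Rabs gm + 1))) 1))).
  assert (Heta : 0 < eta).
  { unfold eta. repeat apply Rmin_pos; try lra;
    first [apply Rdiv_lt_0_compat; lra | apply Rinv_0_lt_compat; lra]. }
  assert (He1 : eta <= d / 2) by apply Rmin_l.
  assert (He2 : eta <= df / (Rabs k + 2)) by (eapply Rle_trans; [apply Rmin_r|apply Rmin_l]).
  assert (He3 : eta <= / (8 * (Rabs gm + 1))) by (eapply Rle_trans; [apply Rmin_r|eapply Rle_trans; [apply Rmin_r| apply Rmin_l]]).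
  assert (He4 : eta <= 1) by (eapply Rle_trans; [apply Rmin_r|eapply Rle_trans; [apply Rmin_r| apply Rmin_r]]).
  destruct (F_small c d F Hn Hs Hd eta Heta) as [r0 [Hr0 [Hr0d Hsm]]].
  set (rho := Rmin r0 (Rmin 1 (Rmin (df / (Rabs k + 2)) (Rmin (/ (8 * (Rabs t1 + 1))) (/ (16 * (Rabs (t7 * k)) + 16)))))).
  assert (Hrho : 0 < rho).
  { unfold rho. assert (X := Rabs_pos (t7 * k)). repeat apply Rmin_pos; try lra;
    first [apply Rdiv_lt_0_compat; lra | apply Rinv_0_lt_compat; lra]. }
  assert (Hr1 : rho <= r0) by apply Rmin_l.
  assert (Hr2 : rho <= 1) by (eapply Rle_trans; [apply Rmin_r|apply Rmin_l]).
  assert (Hr3 : rho <= df / (Rabs k + 2)) by (eapply Rle_trans; [apply Rmin_r|eapply Rle_trans; [apply Rmin_r| apply Rmin_l]]).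
  assert (Hr4 : rho <= / (8 * (Rabs t1 + 1))) by (eapply Rle_trans; [apply Rmin_r|eapply Rle_trans; [apply Rmin_r| eapply Rle_trans; [apply Rmin_r|apply Rmin_l]]]).
  assert (Hr5 : rho <= / (16 * (Rabs (t7 * k)) + 16)) by (eapply Rle_trans; [apply Rmin_r|eapply Rle_trans; [apply Rmin_r| eapply Rle_trans; [apply Rmin_r|apply Rmin_r]]]).
  assert (Kdf : (Rabs k + 2) * (df / (Rabs k + 2)) = df) by (field; lra).
  assert (Fsm : forall x1 y1 x2 y2 u, cbox rho x1 y1 x2 y2 u -> Rabs (F x1 y1 x2 y2 u) <= eta).
  { intros x1 y1 x2 y2 u (B1 & B2 & B3 & B4 & B5).
    apply (Hsm (V5 x1 y1 x2 y2 u)). intros kk Hk. destruct kk as [|[|[|[|[|kk]]]]]; simpl; try lra; lia. }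
  assert (Xsm : forall x1 Fv, Rabs x1 <= rho -> Rabs Fv <= eta -> Rabs (x1 + k / 2 * Fv) <= df).
  { intros x1 Fv H1 H2. eapply Rle_trans; [apply Rabs_triang|].
    rewrite Rabs_mult. unfold Rdiv. rewrite Rabs_mult, (Rabs_pos_eq (/ 2)) by lra.
    assert (Rabs k * / 2 * Rabs Fv <= Rabs k * / 2 * eta) by (apply Rmult_le_compat_l; [nra|auto]).
    assert (rho * (Rabs k + 2) <= df) by nra.
    assert (eta * (Rabs k + 2) <= df) by nra.
    nra. }
  set (M0 := 4 * Rabs t7 * (Rabs k * (4 + 2 * Rabs m1 + 4 * Rabs t7) + 3)).
  assert (Hbox : forall x1 y1 x2 y2 u, cbox rho x1 y1 x2 y2 u ->
    Rabs (F x1 y1 x2 y2 u) < d /\ D0f t1 t7 m1 x1 (x2 ^ 2 + y2 ^ 2) (F x1 y1 x2 y2 u) <> 0 /\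
    1 + A * (x1 + k / 2 * F x1 y1 x2 y2 u) > 0 /\
    Rabs (beta0 t1 t7 m1 x1 (x2 ^ 2 + y2 ^ 2) (F x1 y1 x2 y2 u)) <= M0).
  { intros x1 y1 x2 y2 u Hb.
    assert (HF := Fsm _ _ _ _ _ Hb).
    destruct Hb as (B1 & B2 & B3 & B4 & B5).
    set (Fv := F x1 y1 x2 y2 u) in *. set (r := x2 ^ 2 + y2 ^ 2).
    assert (Hr : 0 <= r <= 2 * rho * rho).
    { unfold r. apply abs_split in B3. apply abs_split in B4. split. nra. nra. }
    destruct (FX (x1 + k / 2 * Fv) (Xsm x1 Fv B1 HF)) as [HA _].
    assert (T1 : Rabs (t1 * x1) <= 1/8).
    { rewrite Rabs_mult. apply Rle_trans with (Rabs t1 * / (8 * (Rabs t1 + 1))).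
      apply Rmult_le_compat_l; auto. lra.
      apply Rmult_le_reg_r with (8 * (Rabs t1 + 1)). lra. rewrite Rmult_assoc, Rinv_l by lra. lra. }
    assert (T2 : Rabs (gm * Fv) <= 1/8).
    { rewrite Rabs_mult. apply Rle_trans with (Rabs gm * / (8 * (Rabs gm + 1))).
      apply Rmult_le_compat_l; auto. lra.
      apply Rmult_le_reg_r with (8 * (Rabs gm + 1)). lra. rewrite Rmult_assoc, Rinv_l by lra. lra. }
    assert (T3 : Rabs (t7 * k * r) <= 1/8).
    { rewrite Rabs_mult, (Rabs_pos_eq r) by lra.
      assert (X := Rabs_pos (t7 * k)).
      apply Rle_trans with (Rabs (t7 * k) * (2 * rho * rho)). apply Rmult_le_compat_l; lra.
      assert (Rabs (t7 * k) * rho <= / 16).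
      { apply Rle_trans with (Rabs (t7 * k) * / (16 * (Rabs (t7 * k)) + 16)). apply Rmult_le_compat_l; auto.
        apply Rmult_le_reg_r with (16 * (Rabs (t7 * k)) + 16). lra. rewrite Rmult_assoc, Rinv_l by lra. lra. }
      nra. }
    assert (HD0 : 5/8 <= D0f t1 t7 m1 x1 r Fv <= 11/8).
    { unfold D0f. fold gm. apply abs_split in T1. apply abs_split in T2. apply abs_split in T3.
      unfold k in T3. split; lra. }
    assert (HN0 : Rabs (N0f t1 t7 m1 x1 r Fv) <= 4 + 2 * Rabs m1 + 4 * Rabs t7).
    { unfold N0f. eapply Rle_trans; [apply Rabs_triang|]. rewrite Rabs_Ropp.
      eapply Rle_trans; [apply Rplus_le_compat_r; apply Rabs_triang|].
      assert (Rabs (4 * x1) <= 4) by (rewrite Rabs_mult, Rabs_pos_eq by lra; lra).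
      assert (Rabs (2 * m1 * Fv) <= 2 * Rabs m1).
      { rewrite !Rabs_mult, (Rabs_pos_eq 2) by lra. assert (2 * Rabs m1 * Rabs Fv <= 2 * Rabs m1 * 1) by (apply Rmult_le_compat_l; nra). lra. }
      assert (Rabs (2 * t7 * r) <= 4 * Rabs t7).
      { destruct Hr as [Hr0' Hr1']. assert (Hr2' : r <= 2) by nra.
        rewrite !Rabs_mult, (Rabs_pos_eq 2), (Rabs_pos_eq r) by lra. nra. }
      lra. }
    split; [lra|]. split; [lra|]. split; [apply Rlt_le_trans with (1/2); [lra | apply Rge_le; exact HA]|].
    unfold beta0. fold (AA t1 t7 m1). fold A. fold k.
    set (D0 := D0f t1 t7 m1 x1 r Fv) in *. set (N0 := N0f t1 t7 m1 x1 r Fv) in *.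
    set (Y := 1 + A * (x1 + k / 2 * Fv)) in *.
    assert (Hden : 5/16 <= D0 * Y) by nra.
    rewrite Rabs_div by lra. rewrite (Rabs_pos_eq (D0 * Y)) by lra.
    apply Rmult_le_reg_r with (D0 * Y); [lra|]. unfold Rdiv. rewrite Rmult_assoc, Rinv_l, Rmult_1_r by lra.
    assert (Rabs (t7 * (k * N0 + 2 * D0)) <= Rabs t7 * (Rabs k * (4 + 2 * Rabs m1 + 4 * Rabs t7) + 3)).
    { rewrite Rabs_mult. apply Rmult_le_compat_l; auto. eapply Rle_trans; [apply Rabs_triang|].
      rewrite !Rabs_mult, (Rabs_pos_eq 2), (Rabs_pos_eq D0) by lra.
      assert (Rabs k * Rabs N0 <= Rabs k * (4 + 2 * Rabs m1 + 4 * Rabs t7)) by (apply Rmult_le_compat_l; auto). lra. }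
    unfold M0. assert (0 <= Rabs t7 * (Rabs k * (4 + 2 * Rabs m1 + 4 * Rabs t7) + 3)) by (apply Rmult_le_pos; nra).
    nra. }
  assert (LZ := L_zero t1 t7 t8 m1 F d f HV Hf0 Hfd rho M0 ltac:(split; lra) Hbox).
  exists rho. split; [lra|]. intros x1 y1 x2 y2 u v B1 B2 B3 B4 B5 B6.
  assert (Hb : cbox rho x1 y1 x2 y2 u) by (repeat split; lra).
  assert (HF := Fsm _ _ _ _ _ Hb).
  assert (Xsm2 : forall w, Rabs w <= rho -> Rabs (x1 + k / 2 * w) <= df).
  { intros w Hw. eapply Rle_trans; [apply Rabs_triang|].
    rewrite Rabs_mult. unfold Rdiv. rewrite Rabs_mult, (Rabs_pos_eq (/ 2)) by lra.
    assert (Rabs k * / 2 * Rabs w <= Rabs k * / 2 * rho) by (apply Rmult_le_compat_l; [nra|auto]).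
    assert (rho * (Rabs k + 2) <= df) by nra. nra. }
  assert (HXv := Xsm2 v ltac:(lra)).
  destruct (FX _ HXv) as [HAv _].
  split. { fold A k. apply Rlt_le_trans with (1/2); [lra | apply Rge_le; exact HAv]. }
  assert (HL := LZ x1 y1 x2 y2 u Hb). unfold Lfun in HL. fold k in HL.
  set (Fv := F x1 y1 x2 y2 u) in *.
  assert (HXF := Xsm x1 Fv ltac:(lra) HF).
  fold k. split.
  - intros ->. lra.
  - intros Hv.
    assert (EF : Fv = x2 ^ 2 + y2 ^ 2 + f (x1 + k / 2 * Fv)) by lra.
    set (fp := fun X => (4 * X + 2 * t7 * f X) / (1 + A * X)).
    assert (Hfp : forall X, Rabs X <= df -> is_derive f X (fp X) /\ Rabs (fp X) <= / (Rabs k + 1)).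
    { intros X HX. destruct (FX X HX) as [H1 H2]. split.
      - apply Hfd. fold A. lra.
      - unfold fp. rewrite Rabs_div by (fold A; lra). rewrite (Rabs_pos_eq (1 + A * X)) by lra.
        assert (N : Rabs (4 * X + 2 * t7 * f X) <= / (2 * (Rabs k + 1))).
        { eapply Rle_trans; [apply Rabs_triang|]. rewrite !Rabs_mult, (Rabs_pos_eq 4), (Rabs_pos_eq 2) by lra.
          assert (4 * Rabs X <= / (4 * (Rabs k + 1))).
          { apply Rle_trans with (4 * / (16 * (Rabs k + 1))). lra. right. field. lra. }
          assert (2 * Rabs t7 * Rabs (f X) <= / (4 * (Rabs k + 1))).
          { apply Rle_trans with (2 * Rabs t7 * ef). apply Rmult_le_compat_l; lra.
            unfold ef. apply Rmult_le_reg_r with (8 * (Rabs t7 + 1) * (Rabs k + 1)). nra.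
            rewrite Rmult_assoc, Rinv_l by nra.
            replace (/ (4 * (Rabs k + 1)) * (8 * (Rabs t7 + 1) * (Rabs k + 1))) with (2 * (Rabs t7 + 1)) by (field; lra).
            lra. }
          replace (/ (2 * (Rabs k + 1))) with (/ (4 * (Rabs k + 1)) + / (4 * (Rabs k + 1))) by (field; lra).
          lra. }
        apply Rmult_le_reg_r with (1 + A * X). lra. unfold Rdiv. rewrite Rmult_assoc, Rinv_l, Rmult_1_r by lra.
        apply Rle_trans with (/ (2 * (Rabs k + 1))); auto.
        assert (0 < / (Rabs k + 1)) by (apply Rinv_0_lt_compat; lra).
        replace (/ (2 * (Rabs k + 1))) with (/ (Rabs k + 1) * (1/2)) by (field; lra). nra. }
    set (Xv := x1 + k / 2 * v) in *. set (XF := x1 + k / 2 * Fv) in *.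
    assert (Hbet : forall X, Rmin XF Xv <= X <= Rmax XF Xv -> Rabs X <= df).
    { intros X HX. apply abs_split in HXv. apply abs_split in HXF. apply Rabs_le.
      assert (Rmin XF Xv >= - df) by (unfold Rmin; destruct (Rle_dec XF Xv); lra).
      assert (Rmax XF Xv <= df) by (unfold Rmax; destruct (Rle_dec XF Xv); lra). lra. }
    destruct (MVT_gen f XF Xv fp) as [xi [Hxi Hmvt]].
    { intros X HX. apply Hfp. apply Hbet. lra. }
    { intros X HX. eapply is_derive_cont. apply Hfp. apply Hbet. auto. }
    destruct (Hfp xi (Hbet xi Hxi)) as [_ Bxi].
    assert (E : v - Fv = fp xi * (k / 2) * (v - Fv)).
    { replace (fp xi * (k / 2) * (v - Fv)) with (fp xi * (Xv - XF)) by (unfold Xv, XF; field).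
      rewrite <- Hmvt. lra. }
    destruct (Req_dec (v - Fv) 0) as [Z|Z]; [lra|].
    exfalso. assert (E2 : Rabs (v - Fv) = Rabs (fp xi) * (Rabs k / 2) * Rabs (v - Fv)).
    { rewrite E at 1. rewrite !Rabs_mult. unfold Rdiv. rewrite (Rabs_mult k), (Rabs_pos_eq (/2)) by lra. reflexivity. }
    assert (P0 : 0 < Rabs (v - Fv)) by (apply Rabs_pos_lt; auto).
    assert (Q : Rabs (fp xi) * (Rabs k / 2) <= 1/2).
    { apply Rle_trans with (/ (Rabs k + 1) * (Rabs k / 2)). apply Rmult_le_compat_r; lra.
      apply Rmult_le_reg_r with (Rabs k + 1). lra.
      replace (/ (Rabs k + 1) * (Rabs k / 2) * (Rabs k + 1)) with (Rabs k / 2) by (field; lra). lra. }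
    nra.
Qed.

Definition Am (lam mu sig tau k : R) : cmat := fun i j =>
  match i, j with
  | 0%nat, 0%nat => RtoC lam
  | 0%nat, 2%nat => (0, - (lam * k / 2))
  | 1%nat, 1%nat => RtoC mu
  | 2%nat, 0%nat => (0, tau)
  | 2%nat, 2%nat => RtoC (sig + tau * k / 2)
  | _, _ => RtoC 0
  end.

Definition bm (kap : R) : pt := ((RtoC 0, RtoC 0), (0, kap)).

Lemma aff_coords lam mu sig tau k kap p :
  let q := aff (Am lam mu sig tau k) (bm kap) p in
  x1_ q = lam * (x1_ p + k / 2 * v_ p) /\ y1_ q = lam * (y1_ p - k / 2 * u_ p) /\
  x2_ q = mu * x2_ p /\ y2_ q = mu * y2_ p /\
  u_ q = - tau * y1_ p + (sig + tau * k / 2) * u_ p /\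
  v_ q = sig * v_ p + tau * (x1_ p + k / 2 * v_ p) + kap.
Proof.
  unfold aff, Am, bm, x1_, y1_, x2_, y2_, u_, v_, z1_, z2_, w_, Re, Im, Cplus, Cmult, RtoC; simpl.
  repeat split; field.
Qed.

Definition lin (c0 c1 c2 c3 c4 c5 c6 : R) (p : pt) : R :=
  c0 + c1 * x1_ p + c2 * y1_ p + c3 * x2_ p + c4 * y2_ p + c5 * u_ p + c6 * v_ p.

Definition inv_aff (lam mu sig tau k kap : R) (q : pt) : pt :=
  mkpt (lin (k * kap / (2 * sig)) (1 / lam + k * tau / (2 * lam * sig)) 0 0 0 0 (- k / (2 * sig)) q)
       (lin 0 0 (1 / lam + k * tau / (2 * lam * sig)) 0 0 (k / (2 * sig)) 0 q)
       (lin 0 0 0 (1 / mu) 0 0 0 q)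
       (lin 0 0 0 0 (1 / mu) 0 0 q)
       (lin 0 0 (tau / (lam * sig)) 0 0 (1 / sig) 0 q)
       (lin (- kap / sig) (- tau / (lam * sig)) 0 0 0 0 (1 / sig) q).

Lemma pt_eq (p q : pt) : x1_ p = x1_ q -> y1_ p = y1_ q -> x2_ p = x2_ q -> y2_ p = y2_ q ->
  u_ p = u_ q -> v_ p = v_ q -> p = q.
Proof.
  destruct p as [[[a b] [c e]] [g h]], q as [[[a' b'] [c' e']] [g' h']].
  unfold x1_, y1_, x2_, y2_, u_, v_, z1_, z2_, w_, Re, Im; simpl. intros; subst; reflexivity.
Qed.

Lemma mkpt_coords x1 y1 x2 y2 u v : let p := mkpt x1 y1 x2 y2 u v in
  x1_ p = x1 /\ y1_ p = y1 /\ x2_ p = x2 /\ y2_ p = y2 /\ u_ p = u /\ v_ p = v.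
Proof. repeat split. Qed.

Lemma inv_aff_l lam mu sig tau k kap p : lam <> 0 -> mu <> 0 -> sig <> 0 ->
  inv_aff lam mu sig tau k kap (aff (Am lam mu sig tau k) (bm kap) p) = p.
Proof.
  intros Hl Hm Hs.
  destruct (aff_coords lam mu sig tau k kap p) as (E1 & E2 & E3 & E4 & E5 & E6).
  apply pt_eq; unfold inv_aff; cbn [x1_ y1_ x2_ y2_ u_ v_ mkpt z1_ z2_ w_ Re Im fst snd];
  unfold lin; rewrite E1, E2, E3, E4, E5, E6; field; auto.
Qed.

Lemma aff_inv_r lam mu sig tau k kap q : lam <> 0 -> mu <> 0 -> sig <> 0 ->
  aff (Am lam mu sig tau k) (bm kap) (inv_aff lam mu sig tau k kap q) = q.
Proof.
  intros Hl Hm Hs.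
  destruct (aff_coords lam mu sig tau k kap (inv_aff lam mu sig tau k kap q)) as (E1 & E2 & E3 & E4 & E5 & E6).
  apply pt_eq; [rewrite E1|rewrite E2|rewrite E3|rewrite E4|rewrite E5|rewrite E6];
  unfold inv_aff; cbn [x1_ y1_ x2_ y2_ u_ v_ mkpt z1_ z2_ w_ Re Im fst snd]; unfold lin; field; auto.
Qed.

Lemma det_Am lam mu sig tau k : fst (det3 (Am lam mu sig tau k)) = lam * mu * sig.
Proof. unfold det3, Am, Cminus, Cplus, Cmult, Copp, RtoC; simpl. field. Qed.

Lemma lin_near c0 c1 c2 c3 c4 c5 c6 q e p : near q e p ->
  Rabs (lin c0 c1 c2 c3 c4 c5 c6 p - lin c0 c1 c2 c3 c4 c5 c6 q)
   <= (Rabs c1 + Rabs c2 + Rabs c3 + Rabs c4 + Rabs c5 + Rabs c6) * e.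
Proof.
  intros (N1 & N2 & N3 & N4 & N5 & N6).
  replace (lin c0 c1 c2 c3 c4 c5 c6 p - lin c0 c1 c2 c3 c4 c5 c6 q) with
    (c1 * (x1_ p - x1_ q) + c2 * (y1_ p - y1_ q) + c3 * (x2_ p - x2_ q) + c4 * (y2_ p - y2_ q)
     + c5 * (u_ p - u_ q) + c6 * (v_ p - v_ q)) by (unfold lin; ring).
  assert (T : forall c x, Rabs x < e -> Rabs (c * x) <= Rabs c * e).
  { intros c x H. rewrite Rabs_mult. apply Rmult_le_compat_l. apply Rabs_pos. lra. }
  assert (T1 := T c1 _ N1). assert (T2 := T c2 _ N2). assert (T3 := T c3 _ N3).
  assert (T4 := T c4 _ N4). assert (T5 := T c5 _ N5). assert (T6 := T c6 _ N6).
  set (a1 := c1 * (x1_ p - x1_ q)) in *. set (a2 := c2 * (y1_ p - y1_ q)) in *.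
  set (a3 := c3 * (x2_ p - x2_ q)) in *. set (a4 := c4 * (y2_ p - y2_ q)) in *.
  set (a5 := c5 * (u_ p - u_ q)) in *. set (a6 := c6 * (v_ p - v_ q)) in *.
  assert (R1 := Rabs_triang (a1 + a2 + a3 + a4 + a5) a6).
  assert (R2 := Rabs_triang (a1 + a2 + a3 + a4) a5).
  assert (R3 := Rabs_triang (a1 + a2 + a3) a4).
  assert (R4 := Rabs_triang (a1 + a2) a3).
  assert (R5 := Rabs_triang a1 a2).
  lra.
Qed.

Lemma open_lin6 d'
  (a0 a1 a2 a3 a4 a5 a6 b0 b1 b2 b3 b4 b5 b6 c0 c1 c2 c3 c4 c5 c6
   e0 e1 e2 e3 e4 e5 e6 f0 f1 f2 f3 f4 f5 f6 g0 g1 g2 g3 g4 g5 g6 : R) :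
  openC (fun q => Rabs (lin a0 a1 a2 a3 a4 a5 a6 q) < d' /\ Rabs (lin b0 b1 b2 b3 b4 b5 b6 q) < d' /\ Rabs (lin c0 c1 c2 c3 c4 c5 c6 q) < d' /\ Rabs (lin e0 e1 e2 e3 e4 e5 e6 q) < d' /\ Rabs (lin f0 f1 f2 f3 f4 f5 f6 q) < d' /\ Rabs (lin g0 g1 g2 g3 g4 g5 g6 q) < d').
Proof.
  intros q (H1 & H2 & H3 & H4 & H5 & H6).
  assert (G : forall z0 z1 z2 z3 z4 z5 z6, Rabs (lin z0 z1 z2 z3 z4 z5 z6 q) < d' ->
     exists e, 0 < e /\ forall p, near q e p -> Rabs (lin z0 z1 z2 z3 z4 z5 z6 p) < d').
  { intros z0 z1 z2 z3 z4 z5 z6 Hz.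
    set (K := Rabs z1 + Rabs z2 + Rabs z3 + Rabs z4 + Rabs z5 + Rabs z6).
    assert (K0 : 0 <= K) by (unfold K; assert (X1:=Rabs_pos z1); assert (X2:=Rabs_pos z2); assert (X3:=Rabs_pos z3);
      assert (X4:=Rabs_pos z4); assert (X5:=Rabs_pos z5); assert (X6:=Rabs_pos z6); lra).
    exists ((d' - Rabs (lin z0 z1 z2 z3 z4 z5 z6 q)) / (K + 1)). split.
    apply Rdiv_lt_0_compat; lra.
    intros p Hp. assert (L := lin_near z0 z1 z2 z3 z4 z5 z6 _ _ _ Hp). fold K in L.
    assert (E : K * ((d' - Rabs (lin z0 z1 z2 z3 z4 z5 z6 q)) / (K + 1)) < d' - Rabs (lin z0 z1 z2 z3 z4 z5 z6 q)).
    { apply Rmult_lt_reg_r with (K + 1). lra.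
      replace (K * ((d' - Rabs (lin z0 z1 z2 z3 z4 z5 z6 q)) / (K + 1)) * (K + 1)) with
        (K * (d' - Rabs (lin z0 z1 z2 z3 z4 z5 z6 q))) by (field; lra). nra. }
    assert (T := Rabs_triang_inv (lin z0 z1 z2 z3 z4 z5 z6 p) (lin z0 z1 z2 z3 z4 z5 z6 q)).
    assert (T2 := Rabs_triang (lin z0 z1 z2 z3 z4 z5 z6 p - lin z0 z1 z2 z3 z4 z5 z6 q) (lin z0 z1 z2 z3 z4 z5 z6 q)).
    replace (lin z0 z1 z2 z3 z4 z5 z6 p - lin z0 z1 z2 z3 z4 z5 z6 q + lin z0 z1 z2 z3 z4 z5 z6 q)
      with (lin z0 z1 z2 z3 z4 z5 z6 p) in T2 by ring.
    lra. }
  destruct (G _ _ _ _ _ _ _ H1) as [r1 [P1 Q1]]. destruct (G _ _ _ _ _ _ _ H2) as [r2 [P2 Q2]].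
  destruct (G _ _ _ _ _ _ _ H3) as [r3 [P3 Q3]]. destruct (G _ _ _ _ _ _ _ H4) as [r4 [P4 Q4]].
  destruct (G _ _ _ _ _ _ _ H5) as [r5 [P5 Q5]]. destruct (G _ _ _ _ _ _ _ H6) as [r6 [P6 Q6]].
  set (e := Rmin r1 (Rmin r2 (Rmin r3 (Rmin r4 (Rmin r5 r6))))).
  assert (He : 0 < e) by (unfold e; repeat apply Rmin_pos; auto).
  assert (Mon : forall r p, e <= r -> near q e p -> near q r p).
  { intros r p Hr (N1 & N2 & N3 & N4 & N5 & N6). repeat split; lra. }
  exists e. split; auto. intros p Hp. repeat split.
  - apply Q1, (Mon r1); auto. apply Rmin_l.
  - apply Q2, (Mon r2); auto. unfold e. eapply Rle_trans; [apply Rmin_r|apply Rmin_l].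
  - apply Q3, (Mon r3); auto. unfold e. eapply Rle_trans; [apply Rmin_r|eapply Rle_trans; [apply Rmin_r|apply Rmin_l]].
  - apply Q4, (Mon r4); auto. unfold e. do 3 (eapply Rle_trans; [apply Rmin_r|]). apply Rmin_l.
  - apply Q5, (Mon r5); auto. unfold e. do 4 (eapply Rle_trans; [apply Rmin_r|]). apply Rmin_l.
  - apply Q6, (Mon r6); auto. unfold e. do 4 (eapply Rle_trans; [apply Rmin_r|]). apply Rmin_r.
Qed.

Lemma equiv_of F d (S : pt -> Prop) lam mu sig tau k kap d' :
  lam <> 0 -> mu <> 0 -> sig <> 0 -> 0 < d' <= d ->
  (forall p, in_box d' p ->
     (v_ p = F (x1_ p) (y1_ p) (x2_ p) (y2_ p) (u_ p) <-> S (aff (Am lam mu sig tau k) (bm kap) p))) ->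
  affinely_equiv F d S.
Proof.
  intros Hl Hm Hs Hd' H.
  exists d', (Am lam mu sig tau k), (bm kap), (fun q => in_box d' (inv_aff lam mu sig tau k kap q)).
  split; [lra|]. split; [lra|]. split.
  { intros E. assert (X := f_equal fst E). rewrite det_Am in X. simpl in X.
    assert (lam * mu * sig <> 0) by (repeat apply Rmult_integral_contrapositive_currified; auto). auto. }
  split.
  { unfold in_box, inv_aff. cbn [x1_ y1_ x2_ y2_ u_ v_ mkpt z1_ z2_ w_ Re Im fst snd]. apply open_lin6. }
  intros q. split.
  - intros [HS HW]. exists (inv_aff lam mu sig tau k kap q).
    rewrite aff_inv_r by auto. split; auto. split; auto.
    apply H; auto. rewrite aff_inv_r by auto. auto.
  - intros [p [[Hb Hv] ->]]. split.
    + apply H; auto.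
    + rewrite inv_aff_l by auto. auto.
Qed.

Lemma final_gen t1 t7 t8 m1 F d f S lam mu sig tau kap :
  integral_variety_12 (in_g t1 t7 t8 m1) F d -> f 0 = 0 ->
  (forall X, 1 + AA t1 t7 m1 * X > 0 ->
     is_derive f X ((4 * X + 2 * t7 * f X) / (1 + AA t1 t7 m1 * X))) ->
  lam <> 0 -> mu <> 0 -> sig <> 0 ->
  (forall p, 1 + AA t1 t7 m1 * (x1_ p + (m1 - t7) / 2 * v_ p) > 0 ->
     (v_ p = x2_ p ^ 2 + y2_ p ^ 2 + f (x1_ p + (m1 - t7) / 2 * v_ p) <->
      S (aff (Am lam mu sig tau (m1 - t7)) (bm kap) p))) ->
  affinely_equiv F d S.
Proof.
  intros HV Hf0 Hfd Hl Hm Hs H.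
  destruct (reduction t1 t7 t8 m1 F d f HV Hf0 Hfd) as [d' [Hd' R]].
  apply (equiv_of F d S lam mu sig tau (m1 - t7) kap d'); auto.
  intros p (B1 & B2 & B3 & B4 & B5 & B6).
  destruct (R _ _ _ _ _ _ B1 B2 B3 B4 B5 B6) as [HA Hiff].
  rewrite Hiff. apply H. auto.
Qed.

Ltac coords p := match goal with |- context [aff (Am ?l ?m ?s ?t ?k) (bm ?c) p] =>
  destruct (aff_coords l m s t k c p) as (C1 & C2 & C3 & C4 & C5 & C6) end.

Lemma case1 t1 t7 t8 m1 F d : t7 = AA t1 t7 m1 ->
  integral_variety_12 (in_g t1 t7 t8 m1) F d -> affinely_equiv F d model1.
Proof.
  intros HB HV.
  refine (final_gen t1 t7 t8 m1 F d (fun X => 2 * X ^ 2) model1 1 1 1 0 0 HV _ _ _ _ _ _).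
  - cbv beta; ring.
  - intros X HX. auto_derive; auto. rewrite <- HB. field. rewrite <- HB in HX. lra.
  - lra.
  - lra.
  - lra.
  - intros p HA. coords p. unfold model1. rewrite C1, C3, C4, C6. split; intros; nra.
Qed.

Lemma case2 t1 t7 t8 m1 F d : AA t1 t7 m1 = 0 -> t7 <> 0 ->
  integral_variety_12 (in_g t1 t7 t8 m1) F d -> affinely_equiv F d model2.
Proof.
  intros HA0 HB HV.
  refine (final_gen t1 t7 t8 m1 F d (fun X => (exp (2 * t7 * X) - 1 - 2 * t7 * X) / t7 ^ 2) model2
     (2 * t7) t7 (t7 ^ 2) (2 * t7) 1 HV _ _ _ _ _ _).
  - cbv beta. rewrite Rmult_0_r, exp_0. field; auto.
  - intros X HX. auto_derive; auto. rewrite HA0. field. auto.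
  - lra.
  - auto.
  - apply pow_nonzero; auto.
  - intros p HA. coords p. unfold model2. rewrite C1, C3, C4, C6.
    set (X := x1_ p + (m1 - t7) / 2 * v_ p).
    split; intros E.
    + rewrite E. field. auto.
    + apply Rmult_eq_reg_l with (t7 ^ 2). 2: apply pow_nonzero; auto.
      replace (t7 ^ 2 * (x2_ p ^ 2 + y2_ p ^ 2 + (exp (2 * t7 * X) - 1 - 2 * t7 * X) / t7 ^ 2))
        with (t7 ^ 2 * (x2_ p ^ 2 + y2_ p ^ 2) + exp (2 * t7 * X) - 1 - 2 * t7 * X) by (field; auto).
      replace (2 * t7 * X) with (2 * t7 * X) in E by reflexivity.
      nra.
Qed.

Lemma case3 t1 t7 t8 m1 F d : AA t1 t7 m1 <> 0 -> t7 = 0 ->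
  integral_variety_12 (in_g t1 t7 t8 m1) F d -> affinely_equiv F d model3.
Proof.
  intros HA0 HB HV. set (A := AA t1 t7 m1) in *.
  refine (final_gen t1 t7 t8 m1 F d (fun X => 4 / A ^ 2 * (A * X - ln (1 + A * X))) model3
     A (A / 2) (A ^ 2 / 4) (- A) 0 HV _ _ _ _ _ _).
  - cbv beta. rewrite Rmult_0_r, Rplus_0_r, ln_1. field; auto.
  - intros X HX. fold A in HX. auto_derive. lra. fold A. rewrite HB. field. split; [lra|auto].
  all: try (intro E; apply HA0; nra).
  - intros p HA. fold A in HA. coords p. unfold model3. rewrite C1, C3, C4, C6.
    set (X := x1_ p + (m1 - t7) / 2 * v_ p) in *.
    split; intros E.
    + split; [lra|]. rewrite E. field. auto.
    + destruct E as [_ E]. apply Rmult_eq_reg_l with (A ^ 2 / 4).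
      2: apply Rmult_integral_contrapositive_currified; [apply pow_nonzero; auto| lra].
      replace (A ^ 2 / 4 * (x2_ p ^ 2 + y2_ p ^ 2 + 4 / A ^ 2 * (A * X - ln (1 + A * X))))
        with ((A / 2 * x2_ p) ^ 2 + (A / 2 * y2_ p) ^ 2 + A * X - ln (1 + A * X)) by (field; auto).
      lra.
Qed.

Lemma case4 t1 t7 t8 m1 F d : AA t1 t7 m1 <> 0 -> AA t1 t7 m1 = 2 * t7 ->
  integral_variety_12 (in_g t1 t7 t8 m1) F d -> affinely_equiv F d model4.
Proof.
  intros HA0 HB HV. set (A := AA t1 t7 m1) in *.
  refine (final_gen t1 t7 t8 m1 F d (fun X => 4 / A ^ 2 * ((1 + A * X) * ln (1 + A * X) - A * X)) model4
     A (A / 2) (A ^ 2 / 4) A 0 HV _ _ _ _ _ _).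
  - cbv beta. rewrite Rmult_0_r, Rplus_0_r, ln_1. field; auto.
  - intros X HX. fold A in HX. auto_derive. lra.
    fold A. replace (2 * t7) with A by lra. field. split; [lra|auto].
  all: try (intro E; apply HA0; nra).
  - intros p HA. fold A in HA. coords p. unfold model4. rewrite C1, C3, C4, C6.
    set (X := x1_ p + (m1 - t7) / 2 * v_ p) in *.
    split; intros E.
    + split; [lra|]. rewrite E. field. auto.
    + destruct E as [_ E]. apply Rmult_eq_reg_l with (A ^ 2 / 4).
      2: apply Rmult_integral_contrapositive_currified; [apply pow_nonzero; auto| lra].
      replace (A ^ 2 / 4 * (x2_ p ^ 2 + y2_ p ^ 2 + 4 / A ^ 2 * ((1 + A * X) * ln (1 + A * X) - A * X)))
        with ((A / 2 * x2_ p) ^ 2 + (A / 2 * y2_ p) ^ 2 + (1 + A * X) * ln (1 + A * X) - A * X) by (field; auto).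
      lra.
Qed.

Lemma case5 t1 t7 t8 m1 F d : AA t1 t7 m1 <> 0 -> t7 <> 0 -> t7 <> AA t1 t7 m1 ->
  AA t1 t7 m1 <> 2 * t7 ->
  integral_variety_12 (in_g t1 t7 t8 m1) F d ->
  exists s alpha : R, (s = 1 \/ s = -1) /\
       alpha <> 0 /\ alpha <> 1 /\ alpha <> 2 /\
       affinely_equiv F d (model5 s alpha).
Proof.
  intros HA0 HB0 HBA HA2 HV. set (A := AA t1 t7 m1) in *.
  set (al := 2 * t7 / A).
  set (a := 4 / (A * (A - 2 * t7))).
  set (Cc := - 2 / (t7 * (A - 2 * t7))).
  assert (HA2' : A - 2 * t7 <> 0) by lra.
  assert (HC : Cc <> 0).
  { unfold Cc. unfold Rdiv. apply Rmult_integral_contrapositive_currified. lra.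
    apply Rinv_neq_0_compat. apply Rmult_integral_contrapositive_currified; auto. }
  assert (HaC : 0 < Rabs Cc) by (apply Rabs_pos_lt; auto).
  exists (Cc / Rabs Cc), al. split.
  { unfold Rabs. destruct (Rcase_abs Cc); [right|left]; field; lra. }
  split. { unfold al. intro E. apply HB0. apply Rmult_eq_reg_r with (2 / A). 2: unfold Rdiv; apply Rmult_integral_contrapositive_currified; [lra|apply Rinv_neq_0_compat; auto].
           replace (t7 * (2 / A)) with (2 * t7 / A) by (field; auto). rewrite E. ring. }
  split. { unfold al. intro E. apply HA2. apply Rmult_eq_reg_r with (/ A). 2: apply Rinv_neq_0_compat; auto.
           rewrite Rinv_r by auto. rewrite <- E. field; auto. }
  split. { unfold al. intro E. apply HBA. apply Rmult_eq_reg_r with (2 / A). 2: unfold Rdiv; apply Rmult_integral_contrapositive_currified; [lra|apply Rinv_neq_0_compat; auto].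
           replace (t7 * (2 / A)) with (2 * t7 / A) by (field; auto). rewrite E. field; auto. }
  refine (final_gen t1 t7 t8 m1 F d (fun X => Cc * (exp (al * ln (1 + A * X)) - 1) + a * A * X) (model5 (Cc / Rabs Cc) al)
     A (/ sqrt (Rabs Cc)) (/ Rabs Cc) (- a * A / Rabs Cc) (Cc / Rabs Cc) HV _ _ _ _ _ _).
  - cbv beta. rewrite Rmult_0_r, Rplus_0_r, ln_1, Rmult_0_r, exp_0. ring.
  - intros X HX. fold A in HX. auto_derive. lra. fold A.
    unfold Cc, a, al. field. repeat split; auto; lra.
  - auto.
  - apply Rinv_neq_0_compat. apply Rgt_not_eq. apply sqrt_lt_R0. auto.
  - apply Rinv_neq_0_compat. lra.
  - intros p HA. fold A in HA. coords p. unfold model5, Rpower. rewrite C1, C3, C4, C6.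
    set (X := x1_ p + (m1 - t7) / 2 * v_ p) in *.
    assert (Hs : / sqrt (Rabs Cc) * / sqrt (Rabs Cc) = / Rabs Cc).
    { rewrite <- Rinv_mult. rewrite sqrt_sqrt; auto. lra. }
    set (E := exp (al * ln (1 + A * X))).
    split; intros H.
    + split; [lra|]. rewrite H. 
      replace ((/ sqrt (Rabs Cc) * x2_ p) ^ 2 + (/ sqrt (Rabs Cc) * y2_ p) ^ 2)
        with (/ sqrt (Rabs Cc) * / sqrt (Rabs Cc) * (x2_ p ^ 2 + y2_ p ^ 2)) by ring.
      rewrite Hs. field. lra.
    + destruct H as [_ H].
      replace ((/ sqrt (Rabs Cc) * x2_ p) ^ 2 + (/ sqrt (Rabs Cc) * y2_ p) ^ 2)
        with (/ sqrt (Rabs Cc) * / sqrt (Rabs Cc) * (x2_ p ^ 2 + y2_ p ^ 2)) in H by ring.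
      rewrite Hs in H.
      apply Rmult_eq_reg_l with (/ Rabs Cc). 2: apply Rinv_neq_0_compat; lra.
      replace (/ Rabs Cc * (x2_ p ^ 2 + y2_ p ^ 2 + (Cc * (E - 1) + a * A * X)))
        with (Cc / Rabs Cc * E + / Rabs Cc * (x2_ p ^ 2 + y2_ p ^ 2) + a * A / Rabs Cc * X - Cc / Rabs Cc) by (field; lra).
      replace (/ Rabs Cc * v_ p) with (/ Rabs Cc * v_ p + - a * A / Rabs Cc * X + Cc / Rabs Cc - (- a * A / Rabs Cc * X + Cc / Rabs Cc)) by ring.
      rewrite H. field. lra.
Qed.

Theorem theorem4p3 :
  forall (t1 t7 t8 m1 : R) (F : R -> R -> R -> R -> R -> R) (d : R),
    integral_variety_12 (in_g t1 t7 t8 m1) F d ->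
    affinely_equiv F d model1 \/
    affinely_equiv F d model2 \/
    affinely_equiv F d model3 \/
    affinely_equiv F d model4 \/
    (exists s alpha : R, (s = 1 \/ s = -1) /\
       alpha <> 0 /\ alpha <> 1 /\ alpha <> 2 /\
       affinely_equiv F d (model5 s alpha)).
Proof.
  intros t1 t7 t8 m1 F d HV.
  destruct (Req_dec t7 (AA t1 t7 m1)) as [E1|E1].
  { left. apply (case1 t1 t7 t8 m1); auto. }
  destruct (Req_dec (AA t1 t7 m1) 0) as [E2|E2].
  { right; left. apply (case2 t1 t7 t8 m1); auto. intro Z; apply E1; lra. }
  destruct (Req_dec t7 0) as [E3|E3].
  { right; right; left. apply (case3 t1 t7 t8 m1); auto. }
  destruct (Req_dec (AA t1 t7 m1) (2 * t7)) as [E4|E4].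
  { right; right; right; left. apply (case4 t1 t7 t8 m1); auto. }
  right; right; right; right. apply (case5 t1 t7 t8 m1); auto.
Qed.
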